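(* For every $\epsilon>0$ and every integer $d\ge 2$ there exist $\mathbf{w}_1,\dots,\mathbf{w}_n\in\mathbb{S}^{d-1}$ and $v_1,\dots,v_n\in\mathbb{R}$ with $|v_i|\le 1/n$, where $n=\lceil 36/\epsilon^2\rceil$, such that the network $N(\mathbf{x})=\sum_{i=1}^{n}v_i\exp(\mathbf{w}_i^\top\mathbf{x})$ satisfies $$\sup_{\mathbf{x}\in B_d}\big|N(\mathbf{x})-F_d(\|\mathbf{x}\|)\big|\le\epsilon .$$
   Context: $\|\cdot\|$ is the Euclidean norm, $B_d$ the closed unit ball and $\mathbb{S}^{d-1}$ the unit sphere in $\mathbb{R}^d$. For an integer $k\ge0$, $k!!=\prod_{i=0}^{\lceil k/2\rceil-1}(k-2i)$ (so $0!!=1$). For $z\in[0,1]$, $F_d(z)=\sum_{k=0}^{\infty}\frac{(d-2)!!}{(2k)!!\,(d+2k-2)!!}z^{2k}$. *)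

(* Defs.v *)
From Stdlib Require Import Reals Lra Lia List ClassicalEpsilon.
Open Scope R_scope.

Definition rsum (n : nat) (f : nat -> R) : R :=
  fold_right Rplus 0 (map f (seq 0 n)).

(* vectors of R^d are represented as functions nat -> R; only coordinates 0..d-1 matter *)
Definition dot (d : nat) (x y : nat -> R) : R := rsum d (fun i => x i * y i).
Definition norm (d : nat) (x : nat -> R) : R := sqrt (dot d x x).

Fixpoint dfact (k : nat) : nat :=
  match k with
  | O => 1%nat
  | S O => 1%nat
  | S (S m as k') => (k * dfact m)%nat
  end.

Definition Fterm (d : nat) (z : R) (k : nat) : R :=
  INR (dfact (d - 2)) / (INR (dfact (2 * k)) * INR (dfact (d + 2 * k - 2))) * z ^ (2 * k).

(* F_d(z) = sum_{k>=0} Fterm d z k  (the series converges) *)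
Definition F (d : nat) (z : R) : R :=
  epsilon (inhabits 0) (fun l => infinite_sum (Fterm d z) l).

Definition net (d n : nat) (w : nat -> nat -> R) (v : nat -> R) (x : nat -> R) : R :=
  rsum n (fun i => v i * exp (dot d (w i) x)).

(* Main.v *)
Require Import Defs.
From Stdlib Require Import Reals Lra Lia List ClassicalEpsilon.
Open Scope R_scope.

Fixpoint sm (f : nat -> R) (n : nat) : R :=
  match n with O => 0 | S n' => sm f n' + f n' end.

Lemma sm_ext f g n : (forall i, (i < n)%nat -> f i = g i) -> sm f n = sm g n.
Proof. induction n; simpl; intros H; auto. rewrite IHn by (intros; apply H; lia). rewrite H by lia; auto. Qed.

Lemma sm_plus f g n : sm (fun i => f i + g i) n = sm f n + sm g n.
Proof. induction n; simpl; lra. Qed.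

Lemma sm_minus f g n : sm (fun i => f i - g i) n = sm f n - sm g n.
Proof. induction n; simpl; lra. Qed.

Lemma sm_scal c f n : sm (fun i => c * f i) n = c * sm f n.
Proof. induction n; simpl; lra. Qed.

Lemma sm_le f g n : (forall i, (i < n)%nat -> f i <= g i) -> sm f n <= sm g n.
Proof. induction n; simpl; intros H; [lra|]. assert (f n <= g n) by (apply H; lia).
 assert (sm f n <= sm g n) by (apply IHn; intros; apply H; lia). lra. Qed.

Lemma sm_nonneg f n : (forall i, (i < n)%nat -> 0 <= f i) -> 0 <= sm f n.
Proof. intros H. replace 0 with (sm (fun _ => 0) n). apply sm_le; auto.
 clear H; induction n; simpl; lra. Qed.

Lemma sm_abs f n : Rabs (sm f n) <= sm (fun i => Rabs (f i)) n.
Proof. induction n; simpl. rewrite Rabs_R0; lra.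
 eapply Rle_trans. apply Rabs_triang. lra. Qed.

Lemma sm_shift f n : sm f (S n) = f 0%nat + sm (fun i => f (S i)) n.
Proof. induction n; simpl in *; lra. Qed.

Lemma sm_add f m n : sm f (m+n) = sm f m + sm (fun i => f (m+i)%nat) n.
Proof. induction n; simpl. rewrite Nat.add_0_r; lra. rewrite Nat.add_succ_r; simpl. lra. Qed.

Lemma sm_tele f n : sm (fun i => f (S i) - f i) n = f n - f 0%nat.
Proof. induction n; simpl; lra. Qed.

Lemma sm_const c n : sm (fun _ => c) n = INR n * c.
Proof. induction n; simpl sm. simpl; lra. rewrite S_INR; lra. Qed.

Lemma sm_swap f m n : sm (fun i => sm (fun j => f i j) n) m = sm (fun j => sm (fun i => f i j) m) n.
Proof. induction m; simpl. induction n; simpl; lra.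
 rewrite IHm. rewrite <- sm_plus. auto. Qed.

Lemma sm_SS f n : sm f (S (S n)) = sm f n + f n + f (S n).
Proof. reflexivity. Qed.
Lemma sm_S f n : sm f (S n) = sm f n + f n.
Proof. reflexivity. Qed.

Lemma sm_even_odd g k : sm g (2*k+1) = sm (fun a => g (2*a)%nat) (k+1) + sm (fun a => g (2*a+1)%nat) k.
Proof. induction k. simpl; lra.
 replace (2 * S k + 1)%nat with (S (S (2*k+1))) by lia. rewrite sm_SS.
 replace (S k + 1)%nat with (S (k+1)) by lia. rewrite !sm_S. rewrite IHk.
 replace (S (2*k+1)) with (2*(k+1))%nat by lia. lra. Qed.

Lemma sum_f_R0_sm f n : sum_f_R0 f n = sm f (S n).
Proof. induction n; simpl in *; lra. Qed.

Definition lsum {A} (L : list A) (f : A -> R) : R := fold_right (fun a acc => f a + acc) 0 L.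

Lemma lsum_app {A} (L1 L2 : list A) f : lsum (L1 ++ L2) f = lsum L1 f + lsum L2 f.
Proof. induction L1; simpl; lra. Qed.
Lemma lsum_map {A B} (g : A -> B) L f : lsum (map g L) f = lsum L (fun a => f (g a)).
Proof. induction L; simpl; lra. Qed.
Lemma lsum_flat_map {A B} (g : A -> list B) L f : lsum (flat_map g L) f = lsum L (fun a => lsum (g a) f).
Proof. induction L; simpl; auto. rewrite lsum_app; lra. Qed.
Lemma lsum_ext {A} (L : list A) f g : (forall a, In a L -> f a = g a) -> lsum L f = lsum L g.
Proof. induction L; simpl; intros H; auto. rewrite H, IHL; auto. Qed.
Lemma lsum_plus {A} (L : list A) f g : lsum L (fun a => f a + g a) = lsum L f + lsum L g.
Proof. induction L; simpl; lra. Qed.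
Lemma lsum_minus {A} (L : list A) f g : lsum L (fun a => f a - g a) = lsum L f - lsum L g.
Proof. induction L; simpl; lra. Qed.
Lemma lsum_scal {A} (L : list A) c f : lsum L (fun a => c * f a) = c * lsum L f.
Proof. induction L; simpl; lra. Qed.
Lemma lsum_scal_r {A} (L : list A) c f : lsum L (fun a => f a * c) = lsum L f * c.
Proof. induction L; simpl; lra. Qed.
Lemma lsum_le {A} (L : list A) f g : (forall a, In a L -> f a <= g a) -> lsum L f <= lsum L g.
Proof. induction L; simpl; intros H. lra. assert (f a <= g a) by auto. assert (lsum L f <= lsum L g) by auto. lra. Qed.
Lemma lsum_zero {A} (L : list A) : lsum L (fun _ => 0) = 0.
Proof. induction L; simpl; lra. Qed.
Lemma lsum_nonneg {A} (L : list A) f : (forall a, In a L -> 0 <= f a) -> 0 <= lsum L f.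
Proof. intros H. rewrite <- (lsum_zero L). apply lsum_le; auto. Qed.
Lemma lsum_abs {A} (L : list A) f : Rabs (lsum L f) <= lsum L (fun a => Rabs (f a)).
Proof. induction L; simpl. rewrite Rabs_R0; lra. eapply Rle_trans. apply Rabs_triang. lra. Qed.
Lemma lsum_cons {A} (a : A) L f : lsum (a :: L) f = f a + lsum L f.
Proof. reflexivity. Qed.
Lemma lsum_seq s n f : lsum (seq s n) f = sm (fun i => f (s+i)%nat) n.
Proof. revert s; induction n; intros s; auto. change (seq s (S n)) with (s :: seq (S s) n). rewrite lsum_cons, IHn. rewrite sm_shift.
 rewrite Nat.add_0_r. f_equal. apply sm_ext; intros; f_equal; lia. Qed.
Lemma lsum_sm {A} (L : list A) f n : lsum L (fun a => sm (f a) n) = sm (fun i => lsum L (fun a => f a i)) n.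
Proof. induction L; simpl. induction n; simpl; lra. rewrite IHL, <- sm_plus; auto. Qed.
Lemma lsum_swap {A B} (L : list A) (M : list B) f : lsum L (fun a => lsum M (fun b => f a b)) = lsum M (fun b => lsum L (fun a => f a b)).
Proof. induction L; simpl. rewrite lsum_zero; auto. rewrite IHL, <- lsum_plus; auto. Qed.

Lemma rsum_sm n f : rsum n f = sm f n.
Proof. unfold rsum. transitivity (lsum (seq 0 n) f). clear; generalize 0%nat; induction n; simpl; intros; auto.
 rewrite IHn; auto. rewrite lsum_seq; auto. Qed.

Lemma dot_sm d x y : dot d x y = sm (fun i => x i * y i) d.
Proof. unfold dot; apply rsum_sm. Qed.

Lemma dot_sym d x y : dot d x y = dot d y x.
Proof. rewrite !dot_sm; apply sm_ext; intros; ring. Qed.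

Lemma dot_nonneg d x : 0 <= dot d x x.
Proof. rewrite dot_sm; apply sm_nonneg; intros; nra. Qed.

Lemma quad_disc A B C : 0 <= A -> (forall t, 0 <= A*t*t + 2*B*t + C) -> B*B <= A*C.
Proof. intros HA H. destruct (Req_dec A 0) as [E|E].
 - subst. destruct (Req_dec B 0) as [EB|EB]. subst; rewrite !Rmult_0_l; lra.
   specialize (H (-(C+1)/(2*B))).
   replace (0 * (- (C + 1) / (2 * B)) * (- (C + 1) / (2 * B)) + 2 * B * (- (C + 1) / (2 * B)) + C) with (-1) in H by (field; auto). lra.
 - specialize (H (-B/A)). assert (0 < A) by lra.
   replace (A * (- B / A) * (- B / A) + 2 * B * (- B / A) + C) with (C - B*B/A) in H by (field; lra).
   apply Rmult_le_reg_r with (/A). apply Rinv_0_lt_compat; lra.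
   replace (A*C*/A) with C by (field; lra). unfold Rdiv in H. lra. Qed.

Lemma dot_cs d u x : dot d u x * dot d u x <= dot d u u * dot d x x.
Proof. apply quad_disc. apply dot_nonneg. intros t.
 replace (dot d u u * t * t + 2 * dot d u x * t + dot d x x) with (sm (fun i => (u i * t + x i)^2) d).
 apply sm_nonneg; intros; apply pow2_ge_0. rewrite !dot_sm.
 replace (sm (fun i => u i * u i) d * t * t + 2 * sm (fun i => u i * x i) d * t + sm (fun i => x i * x i) d)
   with (sm (fun i => (t*t) * (u i * u i) + (2*t) * (u i * x i) + x i * x i) d).
 apply sm_ext; intros; ring. rewrite !sm_plus, !sm_scal. ring. Qed.

Definition Lf (L : list (R * (nat -> R))) (g : (nat -> R) -> R) : R := lsum L (fun p => fst p * g (snd p)).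

Lemma Lf_app L1 L2 g : Lf (L1 ++ L2) g = Lf L1 g + Lf L2 g.
Proof. unfold Lf; apply lsum_app. Qed.
Lemma Lf_cons c a L g : Lf ((c,a)::L) g = c * g a + Lf L g.
Proof. reflexivity. Qed.
Lemma Lf_nil g : Lf nil g = 0.
Proof. reflexivity. Qed.
Definition scale (c : R) (L : list (R * (nat -> R))) := map (fun p => (c * fst p, snd p)) L.
Lemma Lf_scale c L g : Lf (scale c L) g = c * Lf L g.
Proof. unfold Lf, scale. rewrite lsum_map. simpl. rewrite <- lsum_scal. apply lsum_ext; intros; ring. Qed.
Lemma Lf_ext L g h : (forall a, g a = h a) -> Lf L g = Lf L h.
Proof. intros H; unfold Lf; apply lsum_ext; intros; rewrite H; auto. Qed.
Lemma Lf_lin L c g h : Lf L (fun a => c * g a + h a) = c * Lf L g + Lf L h.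
Proof. unfold Lf. rewrite <- lsum_scal, <- lsum_plus. apply lsum_ext; intros; ring. Qed.
Lemma Lf_scal L c g : Lf L (fun a => c * g a) = c * Lf L g.
Proof. unfold Lf. rewrite <- lsum_scal. apply lsum_ext; intros; ring. Qed.
Lemma Lf_plus L g h : Lf L (fun a => g a + h a) = Lf L g + Lf L h.
Proof. unfold Lf. rewrite <- lsum_plus. apply lsum_ext; intros; ring. Qed.
Lemma Lf_swap L M f : Lf L (fun a => Lf M (fun b => f a b)) = Lf M (fun b => Lf L (fun a => f a b)).
Proof. unfold Lf. transitivity (lsum L (fun p => lsum M (fun q => fst p * fst q * f (snd p) (snd q)))).
 apply lsum_ext; intros. rewrite <- lsum_scal. apply lsum_ext; intros; ring.
 rewrite lsum_swap. apply lsum_ext; intros. rewrite <- lsum_scal. apply lsum_ext; intros; ring. Qed.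

Section K.
Variable d : nat.
Definition Kr (a b : nat -> R) := exp (dot d a b).
Definition Bf L M := Lf L (fun a => Lf M (fun b => Kr a b)).

Lemma Bf_sym L M : Bf L M = Bf M L.
Proof. unfold Bf. rewrite Lf_swap. apply Lf_ext; intros; apply Lf_ext; intros. unfold Kr; rewrite dot_sym; auto. Qed.

Definition Bk k L := lsum L (fun p => lsum L (fun q => fst p * fst q * dot d (snd p) (snd q) ^ k)).

Lemma Bk_nonneg k : forall L, 0 <= Bk k L.
Proof. induction k; intros L.
 - unfold Bk. simpl.
   rewrite (lsum_ext L _ (fun p => fst p * lsum L (fun q => fst q))).
   rewrite lsum_scal_r. apply Rle_0_sqr.
   intros p _. rewrite <- lsum_scal. apply lsum_ext; intros; ring.
 - set (Ll := fun l => map (fun p => (fst p * snd p l, snd p)) L).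
   assert (E : Bk (S k) L = sm (fun l => Bk k (Ll l)) d).
   { unfold Bk, Ll.
     transitivity (lsum L (fun p => lsum L (fun q => sm (fun l => (fst p * snd p l) * (fst q * snd q l) * dot d (snd p) (snd q) ^ k) d))).
     { apply lsum_ext; intros p _. apply lsum_ext; intros q _.
       rewrite (sm_ext _ (fun l => (fst p * fst q * dot d (snd p) (snd q) ^ k) * (snd p l * snd q l))) by (intros; ring).
       rewrite sm_scal, <- dot_sm. simpl; ring. }
     transitivity (lsum L (fun p => sm (fun l => lsum L (fun q => (fst p * snd p l) * (fst q * snd q l) * dot d (snd p) (snd q) ^ k)) d)).
     { apply lsum_ext; intros p _. apply (lsum_sm L (fun q l => (fst p * snd p l) * (fst q * snd q l) * dot d (snd p) (snd q) ^ k)). }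
     rewrite (lsum_sm L (fun p l => lsum L (fun q => (fst p * snd p l) * (fst q * snd q l) * dot d (snd p) (snd q) ^ k))).
     apply sm_ext; intros l _. rewrite lsum_map. simpl. apply lsum_ext; intros p _. rewrite lsum_map. simpl. auto. }
   rewrite E. apply sm_nonneg; intros; apply IHk.
Qed.

Lemma lsum_cv {A} (L : list A) u l : (forall a, In a L -> Un_cv (u a) (l a)) ->
  Un_cv (fun N => lsum L (fun a => u a N)) (lsum L l).
Proof. induction L; simpl; intros H.
 - intros e He; exists 0%nat; intros; unfold R_dist; rewrite Rminus_0_r, Rabs_R0; lra.
 - apply CV_plus; auto. Qed.

Lemma cv_scal u l c : Un_cv u l -> Un_cv (fun n => c * u n) (c * l).
Proof. intros H. apply CV_mult; auto. intros e He; exists 0%nat; intros; unfold R_dist; rewrite Rminus_diag, Rabs_R0; lra. Qed.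

Lemma cv_nonneg u l : (forall n, 0 <= u n) -> Un_cv u l -> 0 <= l.
Proof. intros Hu H. destruct (Rle_lt_dec 0 l) as [|Hl]; auto.
 destruct (H (-l)) as [N HN]; [lra|]. specialize (HN N (le_n N)). unfold R_dist in HN.
 specialize (Hu N). rewrite Rabs_right in HN; lra. Qed.

Definition expp (x : R) (N : nat) := sum_f_R0 (fun k => / INR (Factorial.fact k) * x ^ k) N.

Lemma exp_cv x : Un_cv (expp x) (exp x).
Proof. unfold expp, exp. destruct (exist_exp x) as [l Hl]. simpl. exact Hl. Qed.

Lemma Bf_nonneg L : 0 <= Bf L L.
Proof. apply cv_nonneg with (u := fun N => sum_f_R0 (fun k => / INR (Factorial.fact k) * Bk k L) N).
 - assert (Hf : forall k, 0 <= / INR (Factorial.fact k)) by (intros; left; apply Rinv_0_lt_compat, lt_0_INR, Factorial.lt_O_fact).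
   intros N. induction N; cbn [sum_f_R0]. apply Rmult_le_pos; auto. apply Bk_nonneg.
   apply Rplus_le_le_0_compat; auto. apply Rmult_le_pos; auto. apply Bk_nonneg.
 - unfold Bf, Lf, Kr.
   eapply Un_cv_ext. 2: { apply lsum_cv. intros p _. apply cv_scal. apply lsum_cv. intros q _. apply cv_scal. apply exp_cv. }
   intros N. simpl. unfold expp, Bk. induction N.
   + cbn [sum_f_R0]. rewrite <- lsum_scal. apply lsum_ext; intros p _. rewrite <- !lsum_scal. apply lsum_ext; intros; ring.
   + cbn [sum_f_R0]. rewrite <- IHN. rewrite <- lsum_scal, <- lsum_plus. apply lsum_ext; intros p _.
     rewrite <- !lsum_scal, <- lsum_plus. apply lsum_ext; intros; ring.
Qed.

Lemma Bf_cs L x : Lf L (fun a => Kr x a) * Lf L (fun a => Kr x a) <= Kr x x * Bf L L.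
Proof. apply quad_disc. left; unfold Kr; apply exp_pos.
 intros t. pose proof (Bf_nonneg ((t,x)::L)) as H. unfold Bf in H. rewrite Lf_cons in H.
 assert (E1 : Lf ((t,x)::L) (fun b => Kr x b) = t * Kr x x + Lf L (fun a => Kr x a)) by apply Lf_cons.
 assert (E2 : Lf L (fun a => Lf ((t, x) :: L) (fun b => Kr a b)) = t * Lf L (fun a => Kr x a) + Bf L L).
 { unfold Bf. rewrite <- Lf_lin. apply Lf_ext; intros a. rewrite Lf_cons. unfold Kr; rewrite dot_sym; auto. }
 rewrite E1, E2 in H. nra. Qed.
End K.

Lemma Lf_ext_in L g h : (forall p, In p L -> g (snd p) = h (snd p)) -> Lf L g = Lf L h.
Proof. intros H; unfold Lf; apply lsum_ext; intros p Hp; rewrite H; auto. Qed.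

Lemma Lf_const L c : Lf L (fun _ => c) = c * lsum L fst.
Proof. unfold Lf. rewrite <- lsum_scal. apply lsum_ext; intros; ring. Qed.

Lemma exists_le L g c : (forall p, In p L -> 0 <= fst p) -> lsum L fst = 1 -> Lf L g <= c ->
  exists p, In p L /\ g (snd p) <= c.
Proof. intros H1 H2 H3. apply NNPP. intros Hn.
 assert (A : forall L', incl L' L -> 0 < lsum L' fst -> c * lsum L' fst < Lf L' g).
 { induction L'; intros Hi Hp. simpl in Hp; lra.
   assert (Ha : In a L) by (apply Hi; left; auto).
   assert (Hg : c < g (snd a)). { destruct (Rlt_le_dec c (g (snd a))); auto. exfalso; apply Hn; exists a; auto. }
   assert (Hi' : incl L' L) by (intros z Hz; apply Hi; right; auto).
   destruct a as [w u]. rewrite lsum_cons in *. rewrite Lf_cons. simpl in *.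
   assert (0 <= w) by (apply (H1 (w,u)); auto).
   assert (0 <= lsum L' fst) by (apply lsum_nonneg; intros; apply H1; apply Hi'; auto).
   destruct (Req_dec (lsum L' fst) 0) as [E|E].
   - rewrite E in *. assert (0 < w) by lra.
     assert (c * 0 <= Lf L' g). { clear IHL'.
       assert (Z : forall p, In p L' -> fst p = 0).
       { clear -E H1 Hi'. induction L'; intros p Hp. destruct Hp.
         rewrite lsum_cons in E. assert (0 <= fst a) by (apply H1, Hi'; left; auto).
         assert (0 <= lsum L' fst) by (apply lsum_nonneg; intros; apply H1, Hi'; right; auto).
         destruct Hp as [Hp|Hp]. subst; lra. apply IHL'; [intros z Hz; apply Hi'; right; auto | lra | auto]. }
       unfold Lf. rewrite (lsum_ext _ _ (fun _ => 0)). rewrite lsum_zero; lra. intros p Hp2; rewrite Z; auto; ring. }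
     nra.
   - assert (c * lsum L' fst < Lf L' g) by (apply IHL'; auto; lra). nra. }
 specialize (A L (incl_refl L)). rewrite H2 in A. lra. Qed.

Section G.
Variable d : nat.
Variable Rl : list (R * (nat -> R)).
Hypothesis HRw : forall p, In p Rl -> 0 <= fst p.
Hypothesis HRs : lsum Rl fst = 1.
Hypothesis HRu : forall p, In p Rl -> dot d (snd p) (snd p) = 1.

Definition ones (ws : list (nat -> R)) := map (fun w => (1, w)) ws.
Definition St ws := ones ws ++ scale (- INR (length ws)) Rl.
Definition Du u := (1, u) :: scale (-1) Rl.

Lemma Lf_ones ws g : Lf (ones ws) g = lsum ws g.
Proof. unfold Lf, ones. rewrite lsum_map. apply lsum_ext; intros; simpl; ring. Qed.

Lemma Lf_St u ws g : Lf (St (u :: ws)) g = Lf (St ws) g + Lf (Du u) g.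
Proof. unfold St, Du. rewrite !Lf_app, !Lf_cons, !Lf_scale. simpl length. rewrite S_INR.
 change (ones (u :: ws)) with ((1,u) :: ones ws). rewrite Lf_cons. ring. Qed.

Lemma Bf_St_l u ws Z : Bf d (St (u::ws)) Z = Bf d (St ws) Z + Bf d (Du u) Z.
Proof. unfold Bf. apply Lf_St. Qed.

Lemma Bf_St u ws : Bf d (St (u::ws)) (St (u::ws)) = Bf d (St ws) (St ws) + 2 * Bf d (St ws) (Du u) + Bf d (Du u) (Du u).
Proof. rewrite Bf_St_l. rewrite (Bf_sym d (St ws)), (Bf_sym d (Du u)). rewrite !Bf_St_l.
 rewrite (Bf_sym d (Du u) (St ws)). ring. Qed.

Lemma Bf_scale_l c L M : Bf d (scale c L) M = c * Bf d L M.
Proof. unfold Bf; apply Lf_scale. Qed.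

Lemma avg_step ws : Lf Rl (fun u => 2 * Bf d (St ws) (Du u) + Bf d (Du u) (Du u)) <= exp 1.
Proof.
 set (X := St ws).
 assert (E1 : forall u, Bf d X (Du u) = Lf X (fun a => Kr d a u) - Bf d X Rl).
 { intros u. unfold Bf, Du. rewrite (Lf_ext X _ (fun a => 1 * Kr d a u + (-1) * Lf Rl (fun b => Kr d a b))).
   rewrite Lf_plus, !Lf_scal. ring. intros a. rewrite Lf_cons, Lf_scale. auto. }
 assert (E2 : forall u, Bf d (Du u) (Du u) = Kr d u u - 2 * Lf Rl (fun b => Kr d u b) + Bf d Rl Rl).
 { intros u. unfold Bf, Du. rewrite Lf_cons, Lf_scale.
   rewrite (Lf_ext Rl _ (fun a => 1 * Kr d a u + (-1) * Lf Rl (fun b => Kr d a b))).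
   rewrite Lf_cons, Lf_scale, Lf_plus, !Lf_scal.
   rewrite (Lf_ext Rl (fun a => Kr d a u) (fun a => Kr d u a)). ring.
   intros; unfold Kr; rewrite dot_sym; auto. intros a. rewrite Lf_cons, Lf_scale. auto. }
 rewrite (Lf_ext Rl _ (fun u => 2 * (Lf X (fun a => Kr d a u) - Bf d X Rl) + (Kr d u u - 2 * Lf Rl (fun b => Kr d u b) + Bf d Rl Rl)))
  by (intros; rewrite E1, E2; auto).
 rewrite (Lf_ext_in Rl _ (fun u => 2 * Lf X (fun a => Kr d a u) + (-2) * Bf d X Rl + exp 1 + (-2) * Lf Rl (fun b => Kr d u b) + Bf d Rl Rl)).
 2: { intros p Hp. unfold Kr at 2. rewrite HRu; auto. ring. }
 rewrite !Lf_plus, !Lf_scal, !Lf_const, HRs.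
 assert (S1 : Lf Rl (fun u => Lf X (fun a => Kr d a u)) = Bf d X Rl).
 { unfold Bf. rewrite Lf_swap. auto. }
 rewrite S1. fold (Bf d Rl Rl). pose proof (Bf_nonneg d Rl). lra. Qed.

Lemma greedy t : exists ws, length ws = t /\ (forall w, In w ws -> exists p, In p Rl /\ w = snd p) /\
  Bf d (St ws) (St ws) <= INR t * exp 1.
Proof. induction t.
 - exists nil. split; auto. split. intros w []. unfold St. simpl. rewrite Ropp_0.
   unfold ones; simpl. rewrite Bf_scale_l, Bf_sym, Bf_scale_l. lra.
 - destruct IHt as [ws [Hl [Hin HB]]].
   destruct (exists_le Rl (fun u => 2 * Bf d (St ws) (Du u) + Bf d (Du u) (Du u)) (exp 1) HRw HRs (avg_step ws)) as [p [Hp Hle]].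
   exists (snd p :: ws). split. simpl; auto. split.
   + intros w [Hw|Hw]. exists p; auto. auto.
   + rewrite Bf_St. rewrite S_INR. cbv beta in Hle. lra. Qed.

Lemma sample n : exists ws, length ws = n /\ (forall w, In w ws -> exists p, In p Rl /\ w = snd p) /\
  forall x, Rabs (lsum ws (fun w => exp (dot d w x)) - INR n * Lf Rl (fun a => exp (dot d a x)))
     <= sqrt (exp (dot d x x) * (INR n * exp 1)).
Proof. destruct (greedy n) as [ws [Hl [Hin HB]]]. exists ws. repeat split; auto.
 intros x. pose proof (Bf_cs d (St ws) x) as H.
 assert (E : Lf (St ws) (fun a => Kr d x a) = lsum ws (fun w => exp (dot d w x)) - INR n * Lf Rl (fun a => exp (dot d a x))).
 { unfold St. rewrite Lf_app, Lf_ones, Lf_scale, Hl. unfold Kr.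
   rewrite (lsum_ext ws _ (fun w => exp (dot d w x))) by (intros; rewrite dot_sym; auto).
   rewrite (Lf_ext Rl _ (fun a => exp (dot d a x))) by (intros; rewrite dot_sym; auto). ring. }
 rewrite E in H. rewrite <- sqrt_Rsqr_abs. apply sqrt_le_1_alt. unfold Rsqr.
 eapply Rle_trans. apply H. apply Rmult_le_compat_l. left; unfold Kr; apply exp_pos. auto. Qed.
End G.

Notation fct := Factorial.fact.

Lemma fct_pos n : 0 < INR (fct n).
Proof. apply lt_0_INR, Factorial.lt_O_fact. Qed.
Lemma fct_S n : INR (fct (S n)) = INR (S n) * INR (fct n).
Proof. change (fct (S n)) with (S n * fct n)%nat. apply mult_INR. Qed.

Fixpoint bin (n k : nat) : R :=
  match n, k with
  | _, O => 1
  | O, S _ => 0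
  | S n', S k' => bin n' k' + bin n' (S k')
  end.

Lemma bin_gt n k : (n < k)%nat -> bin n k = 0.
Proof. revert k; induction n; intros k H; destruct k; try lia; simpl; auto.
 rewrite !IHn by lia; lra. Qed.

Lemma bin_nn n : bin n n = 1.
Proof. induction n; simpl; auto. rewrite IHn, bin_gt by lia; lra. Qed.

Lemma bin_nonneg n k : 0 <= bin n k.
Proof. revert k; induction n; intros k; destruct k; simpl; try lra. pose proof (IHn k); pose proof (IHn (S k)). lra. Qed.

Lemma bin_ge1 n k : (k <= n)%nat -> 1 <= bin n k.
Proof. revert k; induction n; intros k H; destruct k; simpl; try lra; try lia.
 pose proof (IHn k ltac:(lia)). pose proof (bin_nonneg n (S k)). lra. Qed.

Lemma bin_closed n k : (k <= n)%nat -> bin n k = INR (fct n) / (INR (fct k) * INR (fct (n - k))).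
Proof. revert k; induction n; intros k H.
 - destruct k; [|lia]. simpl. field.
 - destruct k. simpl bin. rewrite ?Nat.sub_0_r. change (fct 0) with 1%nat. rewrite INR_1, Rmult_1_l. unfold Rdiv; rewrite Rinv_r; auto. apply Rgt_not_eq, fct_pos.
   simpl bin. destruct (Nat.eq_dec k n) as [E|E].
   + subst. rewrite bin_nn, bin_gt by lia. rewrite Nat.sub_diag. change (fct 0) with 1%nat. rewrite INR_1, Rmult_1_r. unfold Rdiv; rewrite Rinv_r. lra. apply Rgt_not_eq, fct_pos.
   + rewrite !IHn by lia. replace (S n - S k)%nat with (n - k)%nat by lia.
     replace (n - k)%nat with (S (n - S k))%nat by lia.
     rewrite !fct_S. pose proof (fct_pos k). pose proof (fct_pos (n - S k)). pose proof (fct_pos n).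
     assert (INR k + 1 <= INR n) by (rewrite <- S_INR; apply le_INR; lia). pose proof (pos_INR k).
     rewrite !S_INR. replace (INR (n - S k)) with (INR n - INR k - 1).
     field; repeat split; lra.
     rewrite minus_INR by lia. rewrite S_INR; ring. Qed.

Lemma bin_C n k : (k <= n)%nat -> bin n k = C n k.
Proof. intros; rewrite bin_closed; auto. Qed.

Lemma binomial_sm x y n : (x + y)^n = sm (fun i => bin n i * x^i * y^(n-i)) (S n).
Proof. rewrite binomial, sum_f_R0_sm. apply sm_ext; intros; rewrite bin_C by lia; auto. Qed.

Lemma bin_n0 n : bin n 0 = 1.
Proof. destruct n; reflexivity. Qed.

Lemma bin_le n k : bin n k <= 2^n.
Proof. revert k; induction n; intros k; destruct k; simpl; try lra.
 pose proof (IHn 0%nat). rewrite bin_n0 in H. lra. pose proof (IHn k); pose proof (IHn (S k)). lra. Qed.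

Fixpoint rf (x : R) (n : nat) : R := match n with O => 1 | S n' => rf x n' * (x + INR n') end.

Lemma rf_add x m n : rf x (m + n) = rf x m * rf (x + INR m) n.
Proof. induction n; simpl. rewrite Nat.add_0_r; ring. rewrite Nat.add_succ_r. simpl. rewrite IHn, plus_INR. ring. Qed.

Lemma rf_pos x n : 0 < x -> 0 < rf x n.
Proof. intros Hx; induction n; simpl. lra. apply Rmult_lt_0_compat; auto. pose proof (pos_INR n); lra. Qed.

Lemma rf_mono x y n : 0 < x -> x <= y -> rf x n <= rf y n.
Proof. intros Hx Hy; induction n; simpl. lra. pose proof (pos_INR n). apply Rmult_le_compat; auto.
 left; apply rf_pos; auto. lra. lra. Qed.

Lemma rf_1 n : rf 1 n = INR (fct n).
Proof. induction n; simpl rf. simpl; auto. rewrite IHn, fct_S, S_INR. ring. Qed.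

Lemma rf_S x n : rf x (S n) = x * rf (x + 1) n.
Proof. replace (S n) with (1 + n)%nat by lia. rewrite rf_add. simpl. ring_simplify. auto. Qed.

Definition md (a k : nat) : R := INR (fct (2*k)) / (4^k * INR (fct k) * rf (INR a / 2) k).

Definition Eb (a al be : nat) : R := (INR a / 2) * INR (fct be) / rf (INR a / 2 + INR al) (S be).

Lemma md_pos a k : (1 <= a)%nat -> 0 < md a k.
Proof. intros Ha. unfold md. assert (0 < INR a / 2) by (assert (1 <= INR a) by (apply (le_INR 1); auto); lra).
 pose proof (rf_pos _ k H). pose proof (fct_pos k). pose proof (fct_pos (2*k)). pose proof (pow_lt 4 k ltac:(lra)).
 apply Rdiv_lt_0_compat; auto. apply Rmult_lt_0_compat; auto. apply Rmult_lt_0_compat; auto. Qed.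

Lemma fct_2k k : INR (fct (2*k)) = 4^k * INR (fct k) * rf (1/2) k.
Proof. induction k. simpl; lra.
 replace (2 * S k)%nat with (S (S (2*k))) by lia. rewrite !fct_S, IHk. simpl rf. simpl pow.
 rewrite !S_INR, mult_INR. replace (INR 2) with 2 by (simpl; lra). field. Qed.

Lemma md_1 k : md 1 k = 1.
Proof. unfold md. rewrite fct_2k. simpl INR. field. split. apply Rgt_not_eq, rf_pos; lra.
 split. apply Rgt_not_eq, fct_pos. apply pow_nonzero; lra. Qed.

Lemma md_le1 a k : (1 <= a)%nat -> md a k <= 1.
Proof. intros Ha. rewrite <- (md_1 k). unfold md. assert (1 <= INR a) by (apply (le_INR 1); auto).
 pose proof (fct_pos k). pose proof (fct_pos (2*k)). pose proof (pow_lt 4 k ltac:(lra)).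
 pose proof (rf_pos (INR 1 / 2) k ltac:(simpl; lra)).
 apply Rmult_le_compat_l. lra. apply Rinv_le_contravar. apply Rmult_lt_0_compat; auto. apply Rmult_lt_0_compat; auto.
 apply Rmult_le_compat_l. apply Rmult_le_pos; lra. apply rf_mono. simpl; lra. simpl; lra. Qed.

Lemma md_2 k : md 2 k = bin (2*k) k / 4^k.
Proof. unfold md. rewrite bin_closed by lia. replace (2*k-k)%nat with k by lia.
 replace (INR 2 / 2) with 1 by (simpl; lra). rewrite rf_1. field.
 split. apply Rgt_not_eq, fct_pos. apply pow_nonzero; lra. Qed.

Lemma Eb_nonneg a al be : (1 <= a)%nat -> 0 <= Eb a al be.
Proof. intros Ha. unfold Eb. assert (1 <= INR a) by (apply (le_INR 1); auto). pose proof (pos_INR al).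
 pose proof (fct_pos be). pose proof (rf_pos (INR a / 2 + INR al) (S be) ltac:(lra)).
 apply Rmult_le_pos. apply Rmult_le_pos; lra. left; apply Rinv_0_lt_compat; auto. Qed.

Lemma div_le1 X Y : 0 < Y -> X <= Y -> X / Y <= 1.
Proof. intros. apply Rmult_le_reg_r with Y; auto. unfold Rdiv; rewrite Rmult_assoc, Rinv_l; lra. Qed.

Lemma Eb_le1 a al be : (1 <= a)%nat -> Eb a al be <= 1.
Proof. intros Ha. unfold Eb. assert (1 <= INR a) by (apply (le_INR 1); auto). pose proof (pos_INR al).
 pose proof (fct_pos be). rewrite rf_S.
 apply div_le1. apply Rmult_lt_0_compat. lra. apply rf_pos; lra.
 rewrite <- rf_1. apply Rmult_le_compat. lra. left; apply rf_pos; lra. lra. apply rf_mono; lra. Qed.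

Definition pf (be : nat) (x : R) := sm (fun j => bin be j * (-1)^j / (x + INR j)) (S be).

Lemma pf_step be x : 0 < x -> pf (S be) x = pf be x - pf be (x + 1).
Proof. intros Hx. unfold pf. rewrite sm_shift. simpl bin at 1.
 rewrite (sm_ext _ (fun i => bin be i * (-1)^(S i) / (x + INR (S i)) + bin be (S i) * (-1)^(S i) / (x + INR (S i)))).
 2: { intros i _. simpl bin. unfold Rdiv; ring. }
 rewrite sm_plus.
 assert (E1 : sm (fun i => bin be i * (-1)^(S i) / (x + INR (S i))) (S be) = - sm (fun j => bin be j * (-1)^j / (x + 1 + INR j)) (S be)).
 { match goal with |- _ = - ?X => replace (- X) with ((-1) * X) by ring end. rewrite <- sm_scal. apply sm_ext; intros. rewrite S_INR. simpl pow. unfold Rdiv. replace (x + (INR i + 1)) with (x + 1 + INR i) by ring. ring. }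
 assert (E2 : sm (fun i => bin be (S i) * (-1)^(S i) / (x + INR (S i))) (S be) = sm (fun j => bin be j * (-1)^j / (x + INR j)) (S be) - 1 / x).
 { set (g := fun j => bin be j * (-1)^j / (x + INR j)).
   pose proof (sm_shift g (S be)) as H. rewrite sm_S in H.
   assert (Hg1 : g (S be) = 0) by (unfold g; rewrite bin_gt by lia; unfold Rdiv; ring).
   assert (Hg0 : g 0%nat = 1/x) by (unfold g; rewrite bin_n0; simpl pow; rewrite Rplus_0_r; unfold Rdiv; ring).
   change (sm (fun i => g (S i)) (S be) = sm g (S be) - 1/x). lra. }
 rewrite E1, E2. simpl pow. simpl INR. rewrite Rplus_0_r. unfold Rdiv. ring. Qed.

Lemma pf_closed be : forall x, 0 < x -> pf be x = INR (fct be) / rf x (S be).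
Proof. induction be; intros x Hx.
 - unfold pf. simpl. field. lra.
 - rewrite pf_step by auto. rewrite !IHbe by lra.
   assert (E1 : rf x (S (S be)) = rf x (S be) * (x + INR (S be))) by reflexivity.
   assert (E2 : rf x (S (S be)) = x * rf (x + 1) (S be)) by apply rf_S.
   pose proof (rf_pos x (S be) Hx). pose proof (rf_pos (x+1) (S be) ltac:(lra)).
   assert (EB : rf (x+1) (S be) = rf x (S be) * (x + INR (S be)) / x) by (rewrite <- E1, E2; field; lra).
   rewrite E1, EB, fct_S, S_INR. pose proof (pos_INR be). field. repeat split; lra. Qed.

Lemma Eb_pf a al be : (1 <= a)%nat ->
  Eb a al be = sm (fun j => bin be j * (-1)^j * (INR a / (INR a + 2 * INR (al + j)))) (S be).
Proof. intros Ha. assert (1 <= INR a) by (apply (le_INR 1); auto). pose proof (pos_INR al).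
 unfold Eb. unfold Rdiv at 1. rewrite Rmult_assoc. fold (Rdiv (INR (fct be)) (rf (INR a / 2 + INR al) (S be))).
 rewrite <- pf_closed by lra. unfold pf. rewrite <- sm_scal. apply sm_ext; intros j _.
 rewrite plus_INR. pose proof (pos_INR j). field. lra. Qed.

Lemma comb_id a al be : (1 <= a)%nat ->
  bin (2*(al+be)) (2*al) * Eb a al be * md a al * md 2 be = bin (al+be) al * md (a+2) (al+be).
Proof. intros Ha. assert (1 <= INR a) by (apply (le_INR 1); auto). pose proof (pos_INR al).
 rewrite !bin_closed by lia. replace (2*(al+be) - 2*al)%nat with (2*be)%nat by lia.
 replace (al + be - al)%nat with be by lia.
 unfold md, Eb. replace (INR 2 / 2) with 1 by (simpl; lra). rewrite rf_1.
 replace (INR (a+2) / 2) with (INR a / 2 + 1) by (rewrite plus_INR; simpl; lra).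
 set (g := INR a / 2). assert (Hg : 0 < g) by (unfold g; lra).
 assert (E : g * rf (g + 1) (al + be) = rf g al * rf (g + INR al) (S be)).
 { rewrite <- rf_S, <- rf_add. f_equal. lia. }
 assert (E' : rf (g+1) (al+be) = rf g al * rf (g + INR al) (S be) / g) by (rewrite <- E; field; lra).
 rewrite E'. rewrite pow_add.
 pose proof (fct_pos al). pose proof (fct_pos be). pose proof (fct_pos (2*al)). pose proof (fct_pos (2*be)).
 pose proof (fct_pos (al+be)). pose proof (rf_pos g al Hg). pose proof (rf_pos (g + INR al) (S be) ltac:(lra)).
 pose proof (pow_lt 4 al ltac:(lra)). pose proof (pow_lt 4 be ltac:(lra)).
 field. repeat split; lra. Qed.

Definition Sm a (Rl : list (R * (nat -> R))) x j := lsum Rl (fun p => fst p * (dot a (snd p) x)^j).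

Definition Mom a Rl K eta :=
  (forall p, In p Rl -> 0 <= fst p) /\ lsum Rl fst = 1 /\
  (forall p, In p Rl -> dot a (snd p) (snd p) = 1) /\
  (forall x k, Sm a Rl x (2*k+1) = 0) /\
  (forall x k, (k <= K)%nat -> Rabs (Sm a Rl x (2*k) - md a k * (dot a x x)^k) <= eta * (dot a x x)^k).

Lemma dot_unit_bound a u x : dot a u u = 1 -> (dot a u x)^2 <= dot a x x.
Proof. intros H. pose proof (dot_cs a u x). rewrite H in H0. simpl. lra. Qed.

Lemma Sm_bound a Rl x k : (forall p, In p Rl -> 0 <= fst p) -> lsum Rl fst = 1 ->
  (forall p, In p Rl -> dot a (snd p) (snd p) = 1) -> Rabs (Sm a Rl x (2*k)) <= (dot a x x)^k.
Proof. intros Hw Hs Hu. unfold Sm. eapply Rle_trans. apply lsum_abs.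
 apply Rle_trans with (lsum Rl (fun p => fst p * (dot a x x)^k)).
 - apply lsum_le; intros p Hp. rewrite Rabs_mult, Rabs_right by (apply Rle_ge; auto).
   apply Rmult_le_compat_l; auto. rewrite pow_mult. rewrite Rabs_right. apply pow_incr. split. apply pow2_ge_0.
   apply dot_unit_bound; auto. apply Rle_ge, pow_le, pow2_ge_0.
 - rewrite lsum_scal_r, Hs. lra. Qed.

Lemma neg_pow_even y k : (-y)^(2*k) = y^(2*k).
Proof. rewrite !pow_mult. replace ((-y)^2) with (y^2) by ring. auto. Qed.
Lemma neg_pow_odd y k : (-y)^(2*k+1) = - y^(2*k+1).
Proof. replace (2*k+1)%nat with (S (2*k)) by lia. rewrite <- !tech_pow_Rmult, neg_pow_even. ring. Qed.

Definition e0 : nat -> R := fun i => match i with O => 1 | _ => 0 end.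
Definition ne0 : nat -> R := fun i => match i with O => -1 | _ => 0 end.
Definition Rule1 := (1/2, e0) :: (1/2, ne0) :: nil.

Lemma dot1 u x : dot 1 u x = u 0%nat * x 0%nat.
Proof. rewrite dot_sm. simpl. ring. Qed.

Lemma Mom1 K eta : 0 <= eta -> Mom 1 Rule1 K eta.
Proof. intros He. unfold Mom, Rule1. repeat split.
 - intros p [H|[H|[]]]; subst; simpl; lra.
 - simpl. lra.
 - intros p [H|[H|[]]]; subst; rewrite dot1; simpl; lra.
 - intros x k. unfold Sm, lsum. cbn [fold_right fst snd]. rewrite !dot1. unfold e0, ne0.
   replace (-1 * x 0%nat) with (- x 0%nat) by ring. rewrite neg_pow_odd, Rmult_1_l. ring.
 - intros x k _. unfold Sm, lsum. cbn [fold_right fst snd]. rewrite !dot1, md_1. unfold e0, ne0.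
   replace (-1 * x 0%nat) with (- x 0%nat) by ring. rewrite neg_pow_even, Rmult_1_l. rewrite !pow_mult. replace ((x 0%nat)^2) with (x 0%nat * x 0%nat) by ring.
   match goal with |- Rabs ?X <= _ => replace X with (0:R) by field end.
   rewrite Rabs_R0. apply Rmult_le_pos; auto. apply pow_le. nra. Qed.

Definition shf (a : nat) (y : nat -> R) : nat -> R := fun j => y (a + j)%nat.
Definition cv (a : nat) (v c : nat -> R) (s : R) : nat -> R :=
  fun i => if (i <? a)%nat then sqrt s * v i else sqrt (1 - s) * c (i - a)%nat.

Lemma dot_split a y x : dot (a+2) y x = dot a y x + dot 2 (shf a y) (shf a x).
Proof. rewrite !dot_sm, sm_add. auto. Qed.

Lemma dot_cv a v c s x : dot (a+2) (cv a v c s) x = sqrt s * dot a v x + sqrt (1 - s) * dot 2 c (shf a x).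
Proof. rewrite dot_split. f_equal.
 - rewrite !dot_sm, <- sm_scal. apply sm_ext; intros i Hi. unfold cv. replace (i <? a)%nat with true. ring.
   symmetry; apply Nat.ltb_lt; auto.
 - rewrite !dot_sm, <- sm_scal. apply sm_ext; intros i Hi. unfold cv, shf. replace (a + i <? a)%nat with false.
   replace (a + i - a)%nat with i by lia. ring. symmetry; apply Nat.ltb_ge; lia. Qed.

Lemma dot_cv_self a v c s : 0 <= s <= 1 -> dot (a+2) (cv a v c s) (cv a v c s) = s * dot a v v + (1 - s) * dot 2 c c.
Proof. intros Hs. rewrite dot_cv.
 assert (E1 : dot a v (cv a v c s) = sqrt s * dot a v v).
 { rewrite !dot_sm, <- sm_scal. apply sm_ext; intros i Hi. unfold cv. replace (i <? a)%nat with true. ring.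
   symmetry; apply Nat.ltb_lt; auto. }
 assert (E2 : dot 2 c (shf a (cv a v c s)) = sqrt (1 - s) * dot 2 c c).
 { rewrite !dot_sm, <- sm_scal. apply sm_ext; intros i Hi. unfold cv, shf. replace (a + i <? a)%nat with false.
   replace (a + i - a)%nat with i by lia. ring. symmetry; apply Nat.ltb_ge; lia. }
 rewrite E1, E2.
 replace (sqrt s * (sqrt s * dot a v v)) with ((sqrt s * sqrt s) * dot a v v) by ring.
 replace (sqrt (1-s) * (sqrt (1-s) * dot 2 c c)) with ((sqrt (1-s) * sqrt (1-s)) * dot 2 c c) by ring.
 rewrite !sqrt_sqrt by lra. ring. Qed.

Definition comb a (Rl Cl : list (R * (nat -> R))) (T : list (R * R)) : list (R * (nat -> R)) :=
  flat_map (fun pr => flat_map (fun pc => map (fun pt => (fst pr * fst pc * fst pt, cv a (snd pr) (snd pc) (snd pt))) T) Cl) Rl.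

Lemma lsum_comb a Rl Cl T f : lsum (comb a Rl Cl T) f =
  lsum Rl (fun pr => lsum Cl (fun pc => lsum T (fun pt => f (fst pr * fst pc * fst pt, cv a (snd pr) (snd pc) (snd pt))))).
Proof. unfold comb. rewrite lsum_flat_map. apply lsum_ext; intros. rewrite lsum_flat_map. apply lsum_ext; intros.
 rewrite lsum_map. auto. Qed.

Lemma in_comb a Rl Cl T p : In p (comb a Rl Cl T) -> exists pr pc pt, In pr Rl /\ In pc Cl /\ In pt T /\
  p = (fst pr * fst pc * fst pt, cv a (snd pr) (snd pc) (snd pt)).
Proof. unfold comb. intros H. apply in_flat_map in H. destruct H as [pr [H1 H]]. apply in_flat_map in H.
 destruct H as [pc [H2 H]]. apply in_map_iff in H. destruct H as [pt [H3 H]]. exists pr, pc, pt; auto. Qed.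

Lemma triple L1 L2 L3 (k : R) (X : R * R -> R) (Y Z : R * (nat -> R) -> R) :
  lsum L1 (fun r => lsum L2 (fun c => lsum L3 (fun t => k * X t * Y r * Z c))) = k * lsum L3 X * lsum L1 Y * lsum L2 Z.
Proof. transitivity (lsum L1 (fun r => lsum L2 (fun c => (k * Y r * Z c) * lsum L3 X))).
 { apply lsum_ext; intros r _. apply lsum_ext; intros c _. rewrite <- lsum_scal. apply lsum_ext; intros; ring. }
 transitivity (lsum L1 (fun r => (k * Y r * lsum L3 X) * lsum L2 Z)).
 { apply lsum_ext; intros r _. rewrite <- lsum_scal. apply lsum_ext; intros; ring. }
 rewrite lsum_scal_r. f_equal. rewrite <- lsum_scal. apply lsum_ext; intros; ring. Qed.

Definition Tm (T : list (R * R)) i l := lsum T (fun pt => fst pt * sqrt (snd pt)^i * sqrt (1 - snd pt)^l).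

Lemma Sm_comb a Rl Cl T x j :
  Sm (a+2) (comb a Rl Cl T) x j = sm (fun i => bin j i * Tm T i (j - i) * Sm a Rl x i * Sm 2 Cl (shf a x) (j - i)) (S j).
Proof. unfold Sm. rewrite lsum_comb. simpl fst; simpl snd.
 transitivity (lsum Rl (fun pr => lsum Cl (fun pc => lsum T (fun pt =>
    sm (fun i => bin j i * (fst pt * sqrt (snd pt)^i * sqrt (1 - snd pt)^(j-i)) * (fst pr * dot a (snd pr) x ^ i) * (fst pc * dot 2 (snd pc) (shf a x) ^ (j-i))) (S j))))).
 - apply lsum_ext; intros pr _. apply lsum_ext; intros pc _. apply lsum_ext; intros pt _.
   rewrite dot_cv, binomial_sm, <- sm_scal. apply sm_ext; intros i _. rewrite !Rpow_mult_distr. ring.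
 - rewrite (lsum_ext Rl _ (fun pr => sm (fun i => lsum Cl (fun pc => lsum T (fun pt => bin j i * (fst pt * sqrt (snd pt)^i * sqrt (1 - snd pt)^(j-i)) * (fst pr * dot a (snd pr) x ^ i) * (fst pc * dot 2 (snd pc) (shf a x) ^ (j-i))))) (S j))).
   + rewrite (lsum_sm Rl (fun pr i => lsum Cl (fun pc => lsum T (fun pt => bin j i * (fst pt * sqrt (snd pt)^i * sqrt (1 - snd pt)^(j-i)) * (fst pr * dot a (snd pr) x ^ i) * (fst pc * dot 2 (snd pc) (shf a x) ^ (j-i)))))).
     apply sm_ext; intros i _. unfold Tm. apply (triple Rl Cl T (bin j i) (fun pt => fst pt * sqrt (snd pt)^i * sqrt (1 - snd pt)^(j-i))
        (fun pr => fst pr * dot a (snd pr) x ^ i) (fun pc => fst pc * dot 2 (snd pc) (shf a x) ^ (j-i))).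
   + intros pr _. rewrite <- (lsum_sm Cl (fun pc i => lsum T (fun pt => bin j i * (fst pt * sqrt (snd pt)^i * sqrt (1 - snd pt)^(j-i)) * (fst pr * dot a (snd pr) x ^ i) * (fst pc * dot 2 (snd pc) (shf a x) ^ (j-i))))).
     apply lsum_ext; intros pc _. rewrite <- (lsum_sm T (fun pt i => bin j i * (fst pt * sqrt (snd pt)^i * sqrt (1 - snd pt)^(j-i)) * (fst pr * dot a (snd pr) x ^ i) * (fst pc * dot 2 (snd pc) (shf a x) ^ (j-i)))).
     auto.
Qed.

Lemma prod_err Tv E SR mR SC mC dl e1 e2 Q1 Q2 :
  Rabs (Tv - E) <= dl -> 0 <= E <= 1 -> Rabs SR <= Q1 -> 0 <= mR <= Q1 -> Rabs (SR - mR) <= e1 * Q1 ->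
  Rabs SC <= Q2 -> Rabs (SC - mC) <= e2 * Q2 ->
  Rabs (Tv * SR * SC - E * mR * mC) <= (dl + e1 + e2) * Q1 * Q2.
Proof. intros H1 H2 H3 H4 H5 H6 H7.
 replace (Tv * SR * SC - E * mR * mC) with ((Tv - E) * SR * SC + E * (SR - mR) * SC + E * mR * (SC - mC)) by ring.
 assert (HQ1 : 0 <= Q1) by (pose proof (Rabs_pos SR); lra). assert (HQ2 : 0 <= Q2) by (pose proof (Rabs_pos SC); lra).
 eapply Rle_trans. apply Rabs_triang. eapply Rle_trans. apply Rplus_le_compat_r. apply Rabs_triang.
 rewrite !Rabs_mult. rewrite (Rabs_right E) by lra. rewrite (Rabs_right mR) by lra.
 assert (A1 : Rabs (Tv - E) * Rabs SR * Rabs SC <= dl * Q1 * Q2).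
 { apply Rmult_le_compat. apply Rmult_le_pos; apply Rabs_pos. apply Rabs_pos. apply Rmult_le_compat; auto; apply Rabs_pos. auto. }
 assert (A2 : E * Rabs (SR - mR) * Rabs SC <= 1 * (e1 * Q1) * Q2).
 { apply Rmult_le_compat. apply Rmult_le_pos. lra. apply Rabs_pos. apply Rabs_pos. apply Rmult_le_compat; try lra; apply Rabs_pos. auto. }
 assert (A3 : E * mR * Rabs (SC - mC) <= 1 * Q1 * (e2 * Q2)).
 { apply Rmult_le_compat. apply Rmult_le_pos; lra. apply Rabs_pos. apply Rmult_le_compat; lra. auto. }
 lra. Qed.

Lemma sqrt_pow_even s n : 0 <= s -> sqrt s ^ (2*n) = s ^ n.
Proof. intros Hs. rewrite pow_mult, pow2_sqrt; auto. Qed.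

Lemma step a K Rl Cl T eta1 eta2 dl :
 (1 <= a)%nat -> Mom a Rl K eta1 -> Mom 2 Cl K eta2 ->
 (forall p, In p T -> 0 <= fst p) -> lsum T fst = 1 -> (forall p, In p T -> 0 <= snd p <= 1) ->
 (forall al be, (al + be <= K)%nat -> Rabs (lsum T (fun pt => fst pt * snd pt ^ al * (1 - snd pt)^be) - Eb a al be) <= dl) ->
 0 <= dl -> 0 <= eta1 -> 0 <= eta2 ->
 Mom (a+2) (comb a Rl Cl T) K (4^K * (dl + eta1 + eta2)).
Proof. intros Ha [Rw [Rs [Ru [Ro Re]]]] [Cw [Cs [Cu [Co Ce]]]] Tw Ts Tr HT Hdl He1 He2.
 split; [|split; [|split; [|split]]].
 - intros p Hp. destruct (in_comb _ _ _ _ _ Hp) as [pr [pc [pt [H1 [H2 [H3 E]]]]]]. subst p. simpl.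
   apply Rmult_le_pos; auto. apply Rmult_le_pos; auto.
 - rewrite lsum_comb. simpl fst.
   rewrite (lsum_ext Rl _ (fun r => lsum Cl (fun c => lsum T (fun t => 1 * fst t * fst r * fst c)))).
   rewrite triple, Rs, Cs, Ts. ring.
   intros; apply lsum_ext; intros; apply lsum_ext; intros; ring.
 - intros p Hp. destruct (in_comb _ _ _ _ _ Hp) as [pr [pc [pt [H1 [H2 [H3 E]]]]]]. subst p. simpl.
   rewrite dot_cv_self by auto. rewrite Ru, Cu by auto. ring.
 - intros x k. rewrite Sm_comb. rewrite (sm_ext _ (fun _ => 0)). rewrite sm_const; ring.
   intros i Hi. destruct (Nat.Even_or_Odd i) as [[m Hm]|[m Hm]].
   + replace (2*k+1 - i)%nat with (2*(k-m)+1)%nat by lia. rewrite Co. ring.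
   + subst i. rewrite Ro. ring.
 - intros x k Hk. rewrite Sm_comb. replace (S (2*k)) with (2*k+1)%nat by lia. rewrite sm_even_odd.
   rewrite (sm_ext (fun a0 => _) (fun _ => 0) k). 2: { intros i _. rewrite Ro. ring. }
   rewrite sm_const, Rmult_0_r, Rplus_0_r.
   set (q1 := dot a x x). set (q2 := dot 2 (shf a x) (shf a x)).
   assert (Eq : dot (a+2) x x = q1 + q2) by apply dot_split. rewrite Eq.
   rewrite binomial_sm. rewrite <- sm_scal.
   assert (Hq1 : 0 <= q1) by apply dot_nonneg. assert (Hq2 : 0 <= q2) by apply dot_nonneg.
   replace (k+1)%nat with (S k) by lia.
   rewrite <- sm_minus. eapply Rle_trans. apply sm_abs.
   match goal with |- _ <= ?C * sm ?f ?n => replace (C * sm f n) with (sm (fun i => C * f i) n) by (rewrite sm_scal; ring) end.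
   apply sm_le. intros al Hal.
   set (be := (k - al)%nat). assert (Hk2 : k = (al + be)%nat) by (unfold be; lia).
   replace (2*k - 2*al)%nat with (2*be)%nat by lia. replace (k - al)%nat with be by lia.
   assert (CI := comb_id a al be Ha). rewrite <- Hk2 in CI.
   replace (md (a + 2) k * (bin k al * q1 ^ al * q2 ^ be)) with (bin (2*k) (2*al) * (Eb a al be * (md a al * q1^al) * (md 2 be * q2^be))).
   2: { replace (bin (2*k) (2*al) * (Eb a al be * (md a al * q1^al) * (md 2 be * q2^be))) with
          ((bin (2*k) (2*al) * Eb a al be * md a al * md 2 be) * (q1^al * q2^be)) by ring. rewrite CI. ring. }
   replace (bin (2 * k) (2 * al) * Tm T (2 * al) (2 * be) * Sm a Rl x (2 * al) * Sm 2 Cl (shf a x) (2 * be) -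
      bin (2 * k) (2 * al) * (Eb a al be * (md a al * q1 ^ al) * (md 2 be * q2 ^ be)))
     with (bin (2 * k) (2 * al) * (Tm T (2 * al) (2 * be) * Sm a Rl x (2 * al) * Sm 2 Cl (shf a x) (2 * be) -
       Eb a al be * (md a al * q1 ^ al) * (md 2 be * q2 ^ be))) by ring.
   rewrite Rabs_mult, (Rabs_right (bin _ _)) by (apply Rle_ge, bin_nonneg).
   assert (PE : Rabs (Tm T (2 * al) (2 * be) * Sm a Rl x (2 * al) * Sm 2 Cl (shf a x) (2 * be) -
       Eb a al be * (md a al * q1 ^ al) * (md 2 be * q2 ^ be)) <= (dl + eta1 + eta2) * q1^al * q2^be).
   { apply prod_err.
     - unfold Tm. rewrite (lsum_ext T _ (fun pt => fst pt * snd pt ^ al * (1 - snd pt) ^ be)). apply HT; lia.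
       intros pt Hpt. destruct (Tr pt Hpt). rewrite !sqrt_pow_even by lra. auto.
     - split; [apply Eb_nonneg|apply Eb_le1]; auto.
     - apply Sm_bound; auto.
     - split. apply Rmult_le_pos. left; apply md_pos; auto. apply pow_le; auto.
       rewrite <- (Rmult_1_l (q1^al)) at 2. apply Rmult_le_compat_r. apply pow_le; auto. apply md_le1; auto.
     - apply Re; lia.
     - apply Sm_bound; auto.
     - apply Ce; lia. }
   assert (B1 : bin (2*k) (2*al) <= 4^K * bin k al).
   { eapply Rle_trans. apply bin_le. rewrite pow_mult. replace (2^2) with 4 by ring.
     rewrite <- (Rmult_1_r (4^k)). apply Rmult_le_compat. apply pow_le; lra. lra.
     apply Rle_pow; [lra|lia]. apply bin_ge1; lia. }
   assert (0 <= (dl + eta1 + eta2) * q1^al * q2^be) by (apply Rmult_le_pos; [apply Rmult_le_pos|]; try apply pow_le; lra).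
   eapply Rle_trans. apply Rmult_le_compat. apply bin_nonneg. apply Rabs_pos. apply B1. apply PE.
   right; ring.
Qed.

Lemma polar y0 y1 : exists r phi, 0 <= r /\ y0 = r * cos phi /\ y1 = r * sin phi.
Proof. set (r := sqrt (y0*y0 + y1*y1)).
 assert (Hr : 0 <= r) by apply sqrt_pos.
 assert (Hr2 : r * r = y0*y0 + y1*y1) by (apply sqrt_sqrt; nra).
 destruct (Req_dec r 0) as [E|E].
 - exists 0, 0. assert (y0 = 0 /\ y1 = 0) by (rewrite E in Hr2; nra). split; [lra|]. destruct H; subst; split; ring.
 - set (c := y0 / r). assert (Hc : -1 <= c <= 1).
   { unfold c. assert (y0*y0 <= r*r) by nra. split.
     apply Rmult_le_reg_r with r. lra. unfold Rdiv; rewrite Rmult_assoc, Rinv_l; nra.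
     apply Rmult_le_reg_r with r. lra. unfold Rdiv; rewrite Rmult_assoc, Rinv_l; nra. }
   assert (Hs : sqrt (1 - c²) * r = Rabs y1).
   { rewrite <- (sqrt_Rsqr r) by lra. rewrite <- sqrt_mult_alt. rewrite <- sqrt_Rsqr_abs. f_equal.
     unfold c, Rsqr. replace ((1 - y0 / r * (y0 / r)) * (r * r)) with (r*r - y0*y0) by (field; auto). lra.
     unfold Rsqr in Hc |- *. nra. }
   destruct (Rle_dec 0 y1).
   + exists r, (acos c). split; auto. rewrite cos_acos, sin_acos by auto. split. unfold c; field; auto.
     rewrite Rmult_comm, Hs, Rabs_right; lra.
   + exists r, (- acos c). split; auto. rewrite cos_neg, sin_neg, cos_acos, sin_acos by auto. split. unfold c; field; auto.
     replace (r * - sqrt (1 - c²)) with (- (sqrt (1 - c²) * r)) by ring. rewrite Hs, Rabs_left; lra.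
Qed.

Lemma cos_prod a b : cos a * cos b = (cos (a + b) + cos (a - b)) / 2.
Proof. rewrite cos_plus, cos_minus. field. Qed.

Lemma cos_pow_red n x : cos x ^ n = / 2^n * sm (fun j => bin n j * cos ((INR n - 2 * INR j) * x)) (S n).
Proof. induction n.
 - simpl. replace ((0 - 2 * 0) * x) with 0 by ring. rewrite cos_0. field.
 - rewrite <- tech_pow_Rmult, IHn.
   set (g := fun j => bin n j * cos ((INR (S n) - 2 * INR j) * x)).
   assert (H1 : sm (fun j => bin (S n) j * cos ((INR (S n) - 2 * INR j) * x)) (S (S n)) =
                cos (INR (S n) * x) + sm (fun i => bin n i * cos ((INR n - 1 - 2 * INR i) * x)) (S n) + sm (fun i => g (S i)) (S n)).
   { rewrite sm_shift. rewrite bin_n0. rewrite Rmult_0_r, Rminus_0_r, Rmult_1_l. rewrite Rplus_assoc, <- sm_plus. f_equal.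
     apply sm_ext; intros i _. unfold g. simpl bin. rewrite !S_INR.
     replace ((INR n + 1 - 2 * (INR i + 1)) * x) with ((INR n - 1 - 2 * INR i) * x) by ring. ring. }
   assert (H2 : sm (fun i => g (S i)) (S n) = sm (fun j => bin n j * cos ((INR (S n) - 2 * INR j) * x)) (S n) - cos (INR (S n) * x)).
   { pose proof (sm_shift g (S n)) as H. rewrite sm_S in H.
     assert (Hg1 : g (S n) = 0) by (unfold g; rewrite bin_gt by lia; ring).
     assert (Hg0 : g 0%nat = cos (INR (S n) * x)) by (unfold g; rewrite bin_n0, INR_0, Rmult_1_l; f_equal; ring).
     fold g. lra. }
   rewrite H1, H2.
   replace (cos (INR (S n) * x) + sm (fun i => bin n i * cos ((INR n - 1 - 2 * INR i) * x)) (S n) +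
     (sm (fun j => bin n j * cos ((INR (S n) - 2 * INR j) * x)) (S n) - cos (INR (S n) * x)))
    with (sm (fun i => bin n i * cos ((INR n - 1 - 2 * INR i) * x) + bin n i * cos ((INR (S n) - 2 * INR i) * x)) (S n))
    by (rewrite sm_plus; ring).
   match goal with |- cos x * (?c * sm ?f ?m) = ?c2 * sm ?h ?m =>
     replace (cos x * (c * sm f m)) with (c * sm (fun j => cos x * f j) m) by (rewrite sm_scal; ring);
     replace (c2 * sm h m) with (c * sm (fun j => /2 * h j) m) by (rewrite sm_scal; simpl; field; apply pow_nonzero; lra) end.
   f_equal. apply sm_ext; intros i _.
   rewrite Rmult_comm, Rmult_assoc, cos_prod. rewrite S_INR. unfold Rdiv.
   replace ((INR n - 2 * INR i) * x + x) with ((INR n + 1 - 2 * INR i) * x) by ring.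
   replace ((INR n - 2 * INR i) * x - x) with ((INR n - 1 - 2 * INR i) * x) by ring. ring.
Qed.

Lemma cos_sum_zero P m al : (0 < m < P)%nat ->
  sm (fun i => cos (al + INR i * (2 * PI * INR m / INR P))) P = 0.
Proof. intros Hm. set (b := 2 * PI * INR m / INR P).
 assert (HP : 0 < INR P) by (apply lt_0_INR; lia).
 assert (Hs : 0 < sin (b / 2)).
 { apply sin_gt_0; unfold b. assert (0 < INR m) by (apply lt_0_INR; lia). pose proof PI_RGT_0.
   apply Rdiv_lt_0_compat; [|lra]. apply Rdiv_lt_0_compat; auto. nra.
   assert (INR m < INR P) by (apply lt_INR; lia). pose proof PI_RGT_0.
   apply Rmult_lt_reg_r with (2 * INR P). lra. unfold Rdiv. field_simplify; try lra. nra. }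
 apply Rmult_eq_reg_l with (2 * sin (b/2)); [|lra]. rewrite Rmult_0_r, <- sm_scal.
 rewrite (sm_ext _ (fun i => sin (al + INR (S i) * b - b/2) - sin (al + INR i * b - b / 2))).
 rewrite (sm_tele (fun i => sin (al + INR i * b - b/2))). simpl INR at 2. rewrite Rmult_0_l, Rplus_0_r.
 replace (al + INR P * b - b / 2) with ((al - b/2) + 2 * INR m * PI) by (unfold b; field; lra).
 rewrite sin_period. ring.
 intros i _. rewrite S_INR.
 replace (al + (INR i + 1) * b - b / 2) with ((al + INR i * b) + b/2) by field.
 replace (al + INR i * b - b / 2) with ((al + INR i * b) - b/2) by field.
 rewrite sin_plus, sin_minus. ring.
Qed.

Lemma sm_single f n k : (k < n)%nat -> (forall j, (j < n)%nat -> j <> k -> f j = 0) -> sm f n = f k.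
Proof. induction n; intros Hk H. lia. rewrite sm_S. destruct (Nat.eq_dec k n).
 - subst. rewrite (sm_ext _ (fun _ => 0)). rewrite sm_const; ring. intros; apply H; lia.
 - rewrite IHn by (try lia; intros; apply H; lia). rewrite (H n) by lia. ring. Qed.

Definition th (P i : nat) : R := PI * INR i / INR P.

Lemma circ_avg P k phi : (k < P)%nat ->
  sm (fun i => cos (th P i - phi) ^ (2*k)) P = INR P * bin (2*k) k / 4^k.
Proof. intros Hk. assert (HP : 0 < INR P) by (apply lt_0_INR; lia).
 rewrite (sm_ext _ (fun i => / 2^(2*k) * sm (fun j => bin (2*k) j * cos ((INR (2*k) - 2 * INR j) * (th P i - phi))) (S (2*k)))).
 2: { intros; apply cos_pow_red. }
 rewrite sm_scal, sm_swap.
 rewrite (sm_ext _ (fun j => bin (2*k) j * sm (fun i => cos ((INR (2*k) - 2 * INR j) * (th P i - phi))) P)).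
 2: { intros; rewrite sm_scal; auto. }
 rewrite (sm_single _ _ k). 2: lia.
 - rewrite (sm_ext _ (fun _ => 1)). rewrite sm_const. rewrite pow_mult. replace (2^2) with 4 by ring. field. apply pow_nonzero; lra.
   intros. rewrite mult_INR. replace ((INR 2 * INR k - 2 * INR k) * (th P i - phi)) with 0 by (simpl; ring). apply cos_0.
 - intros j Hj Hjk. destruct (Nat.lt_ge_cases j k) as [Hlt|Hge].
   + rewrite (sm_ext _ (fun i => cos ((- (2 * INR (k - j)) * phi) + INR i * (2 * PI * INR (k - j) / INR P)))).
     rewrite cos_sum_zero by lia. ring.
     intros i _. f_equal. unfold th. rewrite mult_INR, minus_INR by lia. simpl INR. field. lra.
   + rewrite (sm_ext _ (fun i => cos ((- (2 * INR (j - k)) * phi) + INR i * (2 * PI * INR (j - k) / INR P)))).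
     rewrite cos_sum_zero by lia. ring.
     intros i _. rewrite <- cos_neg. f_equal. unfold th. rewrite mult_INR, minus_INR by lia. simpl INR. field. lra.
Qed.

Definition c2 (u0 u1 : R) : nat -> R := fun j => match j with O => u0 | S O => u1 | _ => 0 end.

Lemma dot_c2 u0 u1 y : dot 2 (c2 u0 u1) y = u0 * y 0%nat + u1 * y 1%nat.
Proof. rewrite dot_sm. simpl. ring. Qed.

Definition Circ P := flat_map (fun i => (1 / (2 * INR P), c2 (cos (th P i)) (sin (th P i))) ::
   (1 / (2 * INR P), c2 (- cos (th P i)) (- sin (th P i))) :: nil) (seq 0 P).

Lemma lsum_Circ P f : lsum (Circ P) f = sm (fun i => f (1 / (2 * INR P), c2 (cos (th P i)) (sin (th P i))) +
   f (1 / (2 * INR P), c2 (- cos (th P i)) (- sin (th P i)))) P.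
Proof. unfold Circ. rewrite lsum_flat_map, lsum_seq. apply sm_ext; intros. simpl. ring. Qed.

Lemma Mom_circ P K : (K < P)%nat -> Mom 2 (Circ P) K 0.
Proof. intros HK. assert (HP : 0 < INR P) by (apply lt_0_INR; lia).
 split; [|split; [|split; [|split]]].
 - intros p Hp. unfold Circ in Hp. apply in_flat_map in Hp. destruct Hp as [i [_ [H|[H|[]]]]]; subst; simpl;
   apply Rmult_le_pos; try lra; left; apply Rinv_0_lt_compat; lra.
 - rewrite lsum_Circ. simpl fst. rewrite sm_const. field. lra.
 - intros p Hp. unfold Circ in Hp. apply in_flat_map in Hp. destruct Hp as [i [_ [H|[H|[]]]]]; subst; simpl;
   rewrite dot_c2; simpl; pose proof (sin2_cos2 (th P i)); unfold Rsqr in *; lra.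
 - intros y k. unfold Sm. rewrite lsum_Circ. simpl fst; simpl snd. rewrite (sm_ext _ (fun _ => 0)). rewrite sm_const; ring.
   intros i _. rewrite !dot_c2. replace (- cos (th P i) * y 0%nat + - sin (th P i) * y 1%nat) with (- (cos (th P i) * y 0%nat + sin (th P i) * y 1%nat)) by ring.
   rewrite neg_pow_odd. ring.
 - intros y k Hk. unfold Sm. rewrite lsum_Circ. simpl fst; simpl snd.
   destruct (polar (y 0%nat) (y 1%nat)) as [r [phi [Hr [E0 E1]]]].
   rewrite (sm_ext _ (fun i => (1 / INR P * r^(2*k)) * cos (th P i - phi)^(2*k))).
   + rewrite sm_scal, circ_avg by lia. rewrite md_2.
     assert (Ey : dot 2 y y = r^2) by (rewrite dot_sm; simpl; rewrite E0, E1; pose proof (sin2_cos2 phi); unfold Rsqr in *; nra).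
     rewrite Ey, <- pow_mult. replace (1 / INR P * r ^ (2 * k) * (INR P * bin (2 * k) k / 4 ^ k) - bin (2 * k) k / 4 ^ k * r ^ (2 * k)) with 0
       by (field; split; [apply pow_nonzero; lra | lra]).
     rewrite Rabs_R0. lra.
   + intros i _. rewrite !dot_c2. rewrite E0, E1.
     replace (- cos (th P i) * (r * cos phi) + - sin (th P i) * (r * sin phi)) with (- (r * cos (th P i - phi))) by (rewrite cos_minus; ring).
     replace (cos (th P i) * (r * cos phi) + sin (th P i) * (r * sin phi)) with (r * cos (th P i - phi)) by (rewrite cos_minus; ring).
     rewrite neg_pow_even, Rpow_mult_distr. field. lra.
Qed.

Lemma prefix_avg T n p : (forall i j, (i <= j < n + p)%nat -> T i <= T j) ->
  INR (n + p) * sm T n <= INR n * sm T (n + p).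
Proof. intros HT. induction p.
 - rewrite Nat.add_0_r. lra.
 - replace (n + S p)%nat with (S (n + p)) by lia. rewrite sm_S.
   assert (IH : INR (n + p) * sm T n <= INR n * sm T (n + p)) by (apply IHp; intros; apply HT; lia).
   assert (B : sm T n <= INR n * T (n + p)%nat).
   { rewrite <- sm_const. apply sm_le. intros; apply HT; lia. }
   rewrite S_INR. lra. Qed.

Lemma suffix_avg p : forall T n, (forall i j, (i <= j < n + p)%nat -> T i <= T j) ->
  INR n * sm T (n + p) <= INR (n + p) * sm (fun i => T (p + i)%nat) n.
Proof. induction p; intros T n HT.
 - rewrite Nat.add_0_r. right. f_equal.
 - replace (n + S p)%nat with (S (n + p)) by lia. rewrite sm_shift.
   pose proof (IHp (fun i => T (S i)) n) as IH. cbv beta in IH.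
   assert (IH' : INR n * sm (fun i => T (S i)) (n + p) <= INR (n + p) * sm (fun i => T (S p + i)%nat) n) by (apply IH; intros; apply HT; lia).
   assert (B : INR n * T 0%nat <= sm (fun i => T (S p + i)%nat) n).
   { rewrite <- sm_const. apply sm_le. intros; apply HT; lia. }
   rewrite S_INR. lra. Qed.

Definition G (u v : R) (M : nat) := sm (fun i => v^i * u^(M - 1 - i)) M.

Lemma G_factor u v M : v^M - u^M = (v - u) * G u v M.
Proof. induction M.
 - unfold G; simpl; ring.
 - unfold G in *. rewrite sm_shift. replace (S M - 1 - 0)%nat with M by lia.
   rewrite (sm_ext _ (fun i => v * (v^i * u^(M - 1 - i)))). rewrite sm_scal.
   rewrite Rmult_plus_distr_l.
   match goal with |- _ = _ + (v - u) * (v * ?X) => replace ((v - u) * (v * X)) with (v * ((v - u) * X)) by ring end.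
   rewrite <- IHM. simpl. ring.
   intros i Hi. replace (S M - 1 - S i)%nat with (M - 1 - i)%nat by lia. simpl pow. ring. Qed.

Lemma core_ineq (u v : R) (n p : nat) : 0 <= u <= v -> (1 <= n)%nat ->
  u^p * (v^n - u^n) <= INR n / INR (n + p) * (v^(n+p) - u^(n+p)) <= v^p * (v^n - u^n).
Proof. intros Huv Hn. set (M := (n + p)%nat). set (T := fun i => v^i * u^(M - 1 - i)).
 assert (HM : 0 < INR M) by (apply lt_0_INR; unfold M; lia).
 assert (Hmono : forall i j, (i <= j < M)%nat -> T i <= T j).
 { intros i j Hij. unfold T. set (d := (j - i)%nat). set (e := (M - 1 - j)%nat).
   replace (M - 1 - i)%nat with (d + e)%nat by (unfold d, e; lia). replace j with (i + d)%nat at 1 by (unfold d; lia).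
   rewrite !pow_add. rewrite <- Rmult_assoc.
   apply Rmult_le_compat_r. apply pow_le; lra. apply Rmult_le_compat_l. apply pow_le; lra. apply pow_incr; lra. }
 assert (E1 : u^p * (v^n - u^n) = (v - u) * sm T n).
 { rewrite G_factor. unfold G. rewrite Rmult_comm, Rmult_assoc. f_equal. rewrite Rmult_comm, <- sm_scal.
   apply sm_ext; intros i Hi. unfold T. unfold M. replace (n + p - 1 - i)%nat with ((n - 1 - i) + p)%nat by lia.
   rewrite pow_add. ring. }
 assert (E2 : v^p * (v^n - u^n) = (v - u) * sm (fun i => T (p + i)%nat) n).
 { rewrite G_factor. unfold G. rewrite Rmult_comm, Rmult_assoc. f_equal. rewrite Rmult_comm, <- sm_scal.
   apply sm_ext; intros i Hi. unfold T. unfold M. replace (n + p - 1 - (p + i))%nat with (n - 1 - i)%nat by lia.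
   rewrite pow_add. ring. }
 assert (E3 : v^M - u^M = (v - u) * sm T M) by (rewrite G_factor; auto).
 fold M. rewrite E1, E2, E3.
 pose proof (prefix_avg T n p ltac:(auto)) as P1. pose proof (suffix_avg p T n ltac:(auto)) as P2. fold M in P1, P2.
 assert (Hvu : 0 <= v - u) by lra.
 split.
 - replace (INR n / INR M * ((v - u) * sm T M)) with ((v - u) * (INR n * sm T M / INR M)) by (field; lra).
   apply Rmult_le_compat_l; auto. apply Rmult_le_reg_r with (INR M); auto. unfold Rdiv. rewrite Rmult_assoc, Rinv_l by lra. lra.
 - replace (INR n / INR M * ((v - u) * sm T M)) with ((v - u) * (INR n * sm T M / INR M)) by (field; lra).
   apply Rmult_le_compat_l; auto. apply Rmult_le_reg_r with (INR M); auto. unfold Rdiv. rewrite Rmult_assoc, Rinv_l by lra. lra.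
Qed.

Lemma pow_le_1 x n : 0 <= x <= 1 -> x^n <= 1.
Proof. intros H. rewrite <- (pow1 n). apply pow_incr; lra. Qed.

Lemma pow_diff_le (u v : R) n : 0 <= u <= v -> v <= 1 -> v^n - u^n <= INR n * (v - u).
Proof. intros Huv Hv. rewrite G_factor. rewrite Rmult_comm. apply Rmult_le_compat_r. lra.
 unfold G. rewrite <- (Rmult_1_r (INR n)). rewrite <- sm_const. apply sm_le. intros i Hi.
 rewrite <- (Rmult_1_r 1). apply Rmult_le_compat; try (apply pow_le; lra); apply pow_le_1; lra. Qed.

Lemma Rdiv_le_0_compat x y : 0 <= x -> 0 < y -> 0 <= x / y.
Proof. intros; unfold Rdiv; apply Rmult_le_pos; auto; left; apply Rinv_0_lt_compat; auto. Qed.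

Definition tt (N i : nat) : R := INR i / INR N.
Definition Trule (a N : nat) : list (R * R) := map (fun i => (tt N (S i) ^ a - tt N i ^ a, tt N (S i) ^ 2)) (seq 0 N).

Lemma lsum_Trule a N f : lsum (Trule a N) f = sm (fun i => f (tt N (S i) ^ a - tt N i ^ a, tt N (S i) ^ 2)) N.
Proof. unfold Trule. rewrite lsum_map, lsum_seq. auto. Qed.

Lemma in_Trule a N p : In p (Trule a N) -> exists i, (i < N)%nat /\ p = (tt N (S i) ^ a - tt N i ^ a, tt N (S i) ^ 2).
Proof. unfold Trule. intros H. apply in_map_iff in H. destruct H as [i [E H]]. apply in_seq in H. exists i. split; auto. lia. Qed.

Lemma tt_range N i : (1 <= N)%nat -> (i <= N)%nat -> 0 <= tt N i <= 1.
Proof. intros HN Hi. unfold tt. assert (0 < INR N) by (apply lt_0_INR; lia). assert (INR i <= INR N) by (apply le_INR; auto).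
 pose proof (pos_INR i). split. apply Rdiv_le_0_compat; lra. apply Rmult_le_reg_r with (INR N); auto.
 unfold Rdiv; rewrite Rmult_assoc, Rinv_l; lra. Qed.

Lemma tt_S N i : (1 <= N)%nat -> tt N (S i) - tt N i = 1 / INR N.
Proof. intros HN. unfold tt. rewrite S_INR. field. apply not_0_INR; lia. Qed.

Lemma Trule_w a N p : (1 <= N)%nat -> In p (Trule a N) -> 0 <= fst p.
Proof. intros HN Hp. destruct (in_Trule _ _ _ Hp) as [i [Hi E]]. subst p. simpl.
 pose proof (tt_range N i HN ltac:(lia)). pose proof (tt_range N (S i) HN ltac:(lia)). pose proof (tt_S N i HN).
 assert (0 < INR N) by (apply lt_0_INR; lia). assert (tt N i <= tt N (S i)) by (rewrite <- (Rplus_0_r (tt N i)); assert (0 < 1 / INR N) by (apply Rdiv_lt_0_compat; lra); lra).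
 assert (tt N i ^ a <= tt N (S i) ^ a) by (apply pow_incr; lra). lra. Qed.

Lemma Trule_s a N : (1 <= N)%nat -> (1 <= a)%nat -> lsum (Trule a N) fst = 1.
Proof. intros HN Ha. rewrite lsum_Trule. simpl fst. rewrite (sm_tele (fun i => tt N i ^ a)).
 unfold tt. rewrite Rdiv_diag by (apply not_0_INR; lia). rewrite pow1. simpl INR. unfold Rdiv. rewrite Rmult_0_l.
 rewrite pow_i by lia. ring. Qed.

Lemma Trule_r a N p : (1 <= N)%nat -> In p (Trule a N) -> 0 <= snd p <= 1.
Proof. intros HN Hp. destruct (in_Trule _ _ _ Hp) as [i [Hi E]]. subst p. cbn [snd].
 pose proof (tt_range N (S i) HN ltac:(lia)). split. apply pow_le; lra. apply pow_le_1; lra. Qed.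

Lemma Trule_mom a N m : (1 <= N)%nat -> (1 <= a)%nat ->
  Rabs (lsum (Trule a N) (fun pt => fst pt * snd pt ^ m) - INR a / (INR a + 2 * INR m)) <= INR a / INR N.
Proof. intros HN Ha. rewrite lsum_Trule. cbn [fst snd].
 assert (HNp : 0 < INR N) by (apply lt_0_INR; lia). assert (HA : 1 <= INR a) by (apply (le_INR 1); auto).
 pose proof (pos_INR m).
 set (U := sm (fun i => (tt N (S i) ^ a - tt N i ^ a) * (tt N (S i) ^ 2) ^ m) N).
 set (L := sm (fun i => (tt N (S i) ^ a - tt N i ^ a) * tt N i ^ (2*m)) N).
 set (X := sm (fun i => INR a / INR (a + 2*m) * (tt N (S i) ^ (a + 2*m) - tt N i ^ (a + 2*m))) N).
 assert (EX : X = INR a / (INR a + 2 * INR m)).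
 { unfold X. rewrite sm_scal. rewrite (sm_tele (fun i => tt N i ^ (a + 2*m))).
   unfold tt. rewrite Rdiv_diag by (apply not_0_INR; lia). rewrite pow1, INR_0. unfold Rdiv. rewrite Rmult_0_l.
   rewrite pow_i by lia. rewrite plus_INR, mult_INR. replace (INR 2) with 2 by (simpl; ring). field. lra. }
 assert (H1 : L <= X).
 { apply sm_le. intros i Hi. pose proof (tt_range N i HN ltac:(lia)). pose proof (tt_range N (S i) HN ltac:(lia)).
   pose proof (tt_S N i HN). assert (0 < 1 / INR N) by (apply Rdiv_lt_0_compat; lra).
   destruct (core_ineq (tt N i) (tt N (S i)) a (2*m) ltac:(lra) Ha). lra. }
 assert (H2 : X <= U).
 { apply sm_le. intros i Hi. pose proof (tt_range N i HN ltac:(lia)). pose proof (tt_range N (S i) HN ltac:(lia)).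
   pose proof (tt_S N i HN). assert (0 < 1 / INR N) by (apply Rdiv_lt_0_compat; lra).
   destruct (core_ineq (tt N i) (tt N (S i)) a (2*m) ltac:(lra) Ha). rewrite <- pow_mult. lra. }
 assert (H3 : U - L <= INR a / INR N).
 { unfold U, L. rewrite <- sm_minus.
   apply Rle_trans with (sm (fun i => INR a / INR N * (tt N (S i) ^ (2*m) - tt N i ^ (2*m))) N).
   - apply sm_le. intros i Hi. pose proof (tt_range N i HN ltac:(lia)). pose proof (tt_range N (S i) HN ltac:(lia)).
     pose proof (tt_S N i HN). assert (0 < 1 / INR N) by (apply Rdiv_lt_0_compat; lra).
     rewrite <- pow_mult. replace ((tt N (S i) ^ a - tt N i ^ a) * tt N (S i) ^ (2 * m) - (tt N (S i) ^ a - tt N i ^ a) * tt N i ^ (2 * m))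
       with ((tt N (S i) ^ a - tt N i ^ a) * (tt N (S i) ^ (2 * m) - tt N i ^ (2 * m))) by ring.
     apply Rmult_le_compat_r. assert (tt N i ^ (2*m) <= tt N (S i) ^ (2*m)) by (apply pow_incr; lra). lra.
     eapply Rle_trans. apply pow_diff_le; lra. right. match goal with H : tt N (S i) - tt N i = _ |- _ => rewrite H end. field. lra.
   - rewrite sm_scal, (sm_tele (fun i => tt N i ^ (2*m))). unfold tt. rewrite Rdiv_diag by (apply not_0_INR; lia). rewrite pow1.
     simpl INR. unfold Rdiv at 2. rewrite Rmult_0_l. assert (0 <= 0 ^ (2*m)) by (apply pow_le; lra).
     assert (0 <= INR a / INR N) by (apply Rdiv_le_0_compat; lra). nra. }
 rewrite <- EX. rewrite Rabs_right by lra. lra. Qed.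

Lemma sm_bin be : sm (fun j => bin be j) (S be) = 2^be.
Proof. replace 2 with (1 + 1) by ring. rewrite binomial_sm. apply sm_ext; intros. rewrite !pow1. ring. Qed.

Lemma Trule_beta a N al be : (1 <= N)%nat -> (1 <= a)%nat ->
  Rabs (lsum (Trule a N) (fun pt => fst pt * snd pt ^ al * (1 - snd pt)^be) - Eb a al be) <= 2^be * (INR a / INR N).
Proof. intros HN Ha. rewrite Eb_pf by auto.
 rewrite (lsum_ext _ _ (fun pt => sm (fun j => bin be j * (-1)^j * (fst pt * snd pt ^ (al + j))) (S be))).
 2: { intros pt _. replace (1 - snd pt) with ((-1) * snd pt + 1) by ring. rewrite binomial_sm. rewrite <- sm_scal.
      apply sm_ext; intros j _. rewrite pow1, Rpow_mult_distr, pow_add. ring. }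
 rewrite (lsum_sm (Trule a N) (fun pt j => bin be j * (-1)^j * (fst pt * snd pt ^ (al + j)))).
 rewrite (sm_ext (fun i => lsum (Trule a N) (fun a0 => bin be i * (-1)^i * (fst a0 * snd a0 ^ (al + i))))
    (fun j => bin be j * (-1)^j * lsum (Trule a N) (fun pt => fst pt * snd pt ^ (al + j)))) by (intros; apply lsum_scal).
 rewrite <- sm_minus. eapply Rle_trans. apply sm_abs. rewrite <- sm_bin, Rmult_comm, <- sm_scal.
 apply sm_le. intros j _. rewrite <- Rmult_minus_distr_l, Rabs_mult, Rabs_mult.
 rewrite (Rabs_right (bin be j)) by (apply Rle_ge, bin_nonneg). rewrite pow_1_abs, Rmult_1_r.
 rewrite Rmult_comm. apply Rmult_le_compat_r. apply bin_nonneg.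
 pose proof (Trule_mom a N (al + j) HN Ha). rewrite plus_INR in *. auto. Qed.

Lemma Mom_mono a Rl K e e' : e <= e' -> Mom a Rl K e -> Mom a Rl K e'.
Proof. intros He [H1 [H2 [H3 [H4 H5]]]]. repeat split; auto. intros x k Hk.
 eapply Rle_trans. apply H5; auto. apply Rmult_le_compat_r; auto. apply pow_le, dot_nonneg. Qed.

Lemma mom_step a : (1 <= a)%nat -> (forall K eta, 0 < eta -> exists Rl, Mom a Rl K eta) ->
  forall K eta, 0 < eta -> exists Rl, Mom (a+2) Rl K eta.
Proof. intros Ha IH K eta He.
 set (e1 := eta / (3 * 4^K)).
 assert (H4 : 0 < 4^K) by (apply pow_lt; lra).
 assert (He1 : 0 < e1) by (unfold e1; apply Rdiv_lt_0_compat; lra).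
 destruct (IH K e1 He1) as [Rl HR].
 destruct (INR_unbounded (2^K * INR a / e1)) as [N HN].
 assert (HA : 1 <= INR a) by (apply (le_INR 1); auto).
 assert (HN1 : (1 <= N)%nat).
 { destruct N; [|lia]. simpl in HN. exfalso. assert (0 < 2^K * INR a / e1); [|lra].
   apply Rdiv_lt_0_compat; auto. apply Rmult_lt_0_compat. apply pow_lt; lra. lra. }
 assert (HNp : 0 < INR N) by (apply lt_0_INR; lia).
 exists (comb a Rl (Circ (S K)) (Trule a N)).
 apply Mom_mono with (4^K * (e1 + e1 + 0)).
 - unfold e1. replace (4 ^ K * (eta / (3 * 4 ^ K) + eta / (3 * 4 ^ K) + 0)) with (2 * eta / 3) by (field; lra). lra.
 - apply step; auto.
   + apply Mom_circ; lia.
   + intros p Hp; apply Trule_w with a N; auto.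
   + apply Trule_s; auto.
   + intros p Hp; apply Trule_r with a N; auto.
   + intros al be Hab. eapply Rle_trans. apply Trule_beta; auto.
     apply Rle_trans with (2^K * (INR a / INR N)).
     apply Rmult_le_compat_r. apply Rdiv_le_0_compat; lra. apply Rle_pow; [lra|lia].
     assert (HN' : e1 * INR N > 2^K * INR a).
     { apply (Rmult_lt_compat_l e1) in HN; auto. replace (e1 * (2 ^ K * INR a / e1)) with (2^K * INR a) in HN by (field; lra). lra. }
     apply Rmult_le_reg_r with (INR N); auto. replace (2 ^ K * (INR a / INR N) * INR N) with (2^K * INR a) by (field; lra). lra.
   + lra.
   + lra.
   + lra.
Qed.

Lemma mom_exists_aux j : (forall K eta, 0 < eta -> exists Rl, Mom (1+j) Rl K eta) /\
                         (forall K eta, 0 < eta -> exists Rl, Mom (2+j) Rl K eta).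
Proof. induction j.
 - split; intros K eta He. exists Rule1; apply Mom1; lra.
   exists (Circ (S K)). apply Mom_mono with 0. lra. apply Mom_circ; lia.
 - destruct IHj as [H1 H2]. split.
   + replace (1 + S j)%nat with (2 + j)%nat by lia. auto.
   + replace (2 + S j)%nat with ((1 + j) + 2)%nat by lia. apply mom_step; auto. lia.
Qed.

Lemma mom_exists d K eta : (1 <= d)%nat -> 0 < eta -> exists Rl, Mom d Rl K eta.
Proof. intros Hd He. destruct (mom_exists_aux (d - 1)) as [H _]. replace d with (1 + (d-1))%nat by lia. auto. Qed.

Lemma dfact_SS m : dfact (S (S m)) = (S (S m) * dfact m)%nat.
Proof. reflexivity. Qed.

Lemma dfact_even k : INR (dfact (2*k)) = 2^k * INR (fct k).
Proof. induction k. simpl; lra. replace (2 * S k)%nat with (S (S (2*k))) by lia.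
 rewrite dfact_SS, mult_INR, IHk, fct_S. rewrite !S_INR, mult_INR. simpl pow. replace (INR 2) with 2 by (simpl; lra). ring. Qed.

Lemma dfact_shift e k : INR (dfact (e + 2*k)) = INR (dfact e) * 2^k * rf ((INR e + 2)/2) k.
Proof. induction k. rewrite Nat.add_0_r; simpl; ring. replace (e + 2 * S k)%nat with (S (S (e + 2*k))) by lia.
 rewrite dfact_SS, mult_INR, IHk. simpl rf. simpl pow. rewrite !S_INR, plus_INR, mult_INR. replace (INR 2) with 2 by (simpl; lra). field. Qed.

Lemma dfact_pos2 n : (0 < dfact n /\ 0 < dfact (S n))%nat.
Proof. induction n. simpl; lia. destruct IHn. split; auto. rewrite dfact_SS. lia. Qed.

Lemma Fterm_eq d z k : (2 <= d)%nat -> Fterm d z k = md d k / INR (fct (2*k)) * z^(2*k).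
Proof. intros Hd. unfold Fterm, md. replace (d + 2*k - 2)%nat with ((d - 2) + 2*k)%nat by lia.
 rewrite dfact_shift, dfact_even. replace ((INR (d - 2) + 2) / 2) with (INR d / 2) by (rewrite minus_INR by lia; simpl; field).
 assert (0 < INR (dfact (d-2))) by (apply lt_0_INR; apply dfact_pos2).
 assert (1 <= INR d) by (apply (le_INR 1); lia).
 pose proof (rf_pos (INR d / 2) k ltac:(lra)). pose proof (fct_pos k). pose proof (fct_pos (2*k)).
 replace 4 with (2*2) by ring. rewrite Rpow_mult_distr. field. repeat split; try lra; apply pow_nonzero; lra. Qed.

Lemma four_fact k : 4^k <= 2 * INR (fct (2*k)).
Proof. destruct k. simpl; lra. induction k.
 - simpl. lra.
 - replace (2 * S (S k))%nat with (S (S (2 * S k))) by lia. rewrite !fct_S. simpl pow in *.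
   rewrite !S_INR. pose proof (pos_INR (2 * S k)). rewrite mult_INR in *. replace (INR 2) with 2 in * by (simpl; lra).
   rewrite S_INR in *. pose proof (pos_INR k). pose proof (fct_pos (2 * S k)). assert (HAB : 4 <= (2*(INR k+1)+1+1)*(2*(INR k+1)+1)) by nra. nra. Qed.

Lemma four_pow k : 4^k = 2^k * 2^k.
Proof. replace 4 with (2*2) by ring. apply Rpow_mult_distr. Qed.

Lemma two_fact k : 2^k <= INR (fct (2*k)).
Proof. destruct k. simpl; lra. pose proof (four_fact (S k)). rewrite four_pow in H.
 assert (2 <= 2^(S k)) by (simpl; pose proof (pow_R1_Rle 2 k ltac:(lra)); lra).
 pose proof (pow_lt 2 (S k) ltac:(lra)). nra. Qed.

Lemma two_fact2 K k : (K < k)%nat -> 2^K * 2^k <= INR (fct (2*k)).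
Proof. intros H. pose proof (four_fact k). rewrite four_pow in H0. rewrite <- pow_add.
 assert (2^(K+k) * 2 <= 2^k * 2^k). { rewrite <- pow_add. rewrite <- (pow_1 2) at 2. rewrite <- pow_add. apply Rle_pow; [lra|lia]. }
 lra. Qed.

Lemma geom n : sm (fun k => / 2^k) n = 2 - 2 * / 2^n.
Proof. induction n. simpl; field. rewrite sm_S, IHn. simpl pow. field. apply pow_nonzero; lra. Qed.

Lemma geom_le n : sm (fun k => / 2^k) n <= 2.
Proof. rewrite geom. pose proof (pow_lt 2 n ltac:(lra)). assert (0 < / 2^n) by (apply Rinv_0_lt_compat; auto). lra. Qed.

Lemma Un_cv_sub u l : Un_cv u l -> Un_cv (fun N => u (2*N)%nat) l.
Proof. intros H e He. destruct (H e He) as [N HN]. exists N. intros n Hn. apply HN. lia. Qed.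

Lemma lim_diff_le a b la lb c : Un_cv a la -> Un_cv b lb -> (forall N, Rabs (a N - b N) <= c) -> Rabs (la - lb) <= c.
Proof. intros Ha Hb H. pose proof (CV_minus _ _ _ _ Ha Hb) as Hm.
 destruct (Rle_lt_dec (Rabs (la - lb)) c) as [|Hc]; auto. exfalso.
 destruct (Hm (Rabs (la - lb) - c)) as [N HN]. lra. specialize (HN N (le_n N)). specialize (H N). unfold R_dist in HN.
 pose proof (Rabs_triang_inv (la - lb) (a N - b N)).
 replace (la - lb - (a N - b N)) with (- (a N - b N - (la - lb))) in H0 by ring. rewrite Rabs_Ropp in H0. lra. Qed.

Lemma F_eq d z l : Un_cv (fun N => sum_f_R0 (Fterm d z) N) l -> F d z = l.
Proof. intros H. unfold F. assert (Hs : infinite_sum (Fterm d z) l) by exact H.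
 pose proof (epsilon_spec (inhabits 0) (fun l => infinite_sum (Fterm d z) l) (ex_intro _ l Hs)) as He.
 eapply UL_sequence. exact He. exact H. Qed.

Lemma E_series d Rl x : Un_cv (fun N => sum_f_R0 (fun j => / INR (fct j) * Sm d Rl x j) N) (Lf Rl (fun a => exp (dot d a x))).
Proof. unfold Lf. eapply Un_cv_ext. 2: { apply lsum_cv. intros p _. apply cv_scal. apply exp_cv. }
 intros N. cbv beta. unfold expp. rewrite !sum_f_R0_sm. unfold Sm.
 rewrite (lsum_ext Rl _ (fun p => sm (fun j => fst p * (/ INR (fct j) * dot d (snd p) x ^ j)) (S N))).
 rewrite (lsum_sm Rl (fun p j => fst p * (/ INR (fct j) * dot d (snd p) x ^ j))). apply sm_ext; intros j _.
 rewrite <- lsum_scal. apply lsum_ext; intros; ring.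
 intros p _. rewrite sum_f_R0_sm, <- sm_scal. auto. Qed.

Lemma INR_le_pow2 n : INR n <= 2^n.
Proof. induction n. simpl; lra. rewrite S_INR. simpl. pose proof (pow_R1_Rle 2 n ltac:(lra)). lra. Qed.

Lemma quad d dl : (2 <= d)%nat -> 0 < dl -> exists Rl, (forall p, In p Rl -> 0 <= fst p) /\ lsum Rl fst = 1 /\
  (forall p, In p Rl -> dot d (snd p) (snd p) = 1) /\
  forall x, dot d x x <= 1 -> Rabs (Lf Rl (fun a => exp (dot d a x)) - F d (norm d x)) <= dl.
Proof. intros Hd Hdl.
 destruct (INR_unbounded (8 / dl)) as [K HK].
 assert (HK2 : / 2^K <= dl / 8).
 { pose proof (INR_le_pow2 K). assert (0 < 8 / dl) by (apply Rdiv_lt_0_compat; lra).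
   assert (8 / dl < 2^K) by lra. apply Rmult_le_reg_r with (2^K). apply pow_lt; lra.
   rewrite Rinv_l by (apply pow_nonzero; lra). apply (Rmult_lt_compat_l (dl/8)) in H1; [|lra].
   replace (dl / 8 * (8 / dl)) with 1 in H1 by (field; lra). lra. }
 set (eta := dl / 8).
 destruct (mom_exists d K eta ltac:(lia) ltac:(unfold eta; lra)) as [Rl HM].
 pose proof HM as [Hw [Hs [Hu [Ho He]]]].
 exists Rl. split; [|split; [|split]]; auto.
 intros x Hx. set (q := dot d x x). assert (Hq : 0 <= q) by apply dot_nonneg. assert (Hq1 : q <= 1) by exact Hx.
 set (r := norm d x).
 assert (Hr : forall k, r ^ (2*k) = q^k) by (intros; unfold r, norm; rewrite pow_mult, pow2_sqrt; auto).
 set (A := fun N => sum_f_R0 (fun j => / INR (fct j) * Sm d Rl x j) (2*N)).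
 assert (HA : Un_cv A (Lf Rl (fun a => exp (dot d a x)))) by (apply (Un_cv_sub (fun N => sum_f_R0 (fun j => / INR (fct j) * Sm d Rl x j) N)), E_series).
 assert (EA : forall N, A N = sm (fun k => / INR (fct (2*k)) * Sm d Rl x (2*k)) (S N)).
 { intros N. unfold A. rewrite sum_f_R0_sm. replace (S (2*N)) with (2*N+1)%nat by lia. rewrite sm_even_odd.
   rewrite (sm_ext (fun a => / INR (fct (2*a+1)) * Sm d Rl x (2*a+1)) (fun _ => 0)) by (intros; rewrite Ho; ring).
   rewrite sm_const. replace (N+1)%nat with (S N) by lia. ring. }
 set (B := fun N => sum_f_R0 (Fterm d r) N).
 assert (EB : forall N, B N = sm (fun k => md d k / INR (fct (2*k)) * q^k) (S N)).
 { intros N. unfold B. rewrite sum_f_R0_sm. apply sm_ext; intros. rewrite Fterm_eq, Hr by auto. auto. }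
 assert (Hterm : forall k, 0 <= md d k / INR (fct (2*k)) * q^k <= / 2^k).
 { intros k. pose proof (md_pos d k ltac:(lia)). pose proof (md_le1 d k ltac:(lia)). pose proof (fct_pos (2*k)).
   pose proof (two_fact k). assert (q^k <= 1) by (apply pow_le_1; lra). assert (0 <= q^k) by (apply pow_le; lra).
   assert (/ INR (fct (2*k)) <= / 2^k) by (apply Rinv_le_contravar; auto; apply pow_lt; lra).
   assert (0 < / INR (fct (2*k))) by (apply Rinv_0_lt_compat; auto).
   unfold Rdiv. split. apply Rmult_le_pos; [apply Rmult_le_pos|]; lra.
   replace (/ 2^k) with (1 * / 2^k * 1) by ring. apply Rmult_le_compat; try lra. apply Rmult_le_pos; lra.
   apply Rmult_le_compat; lra. }
 destruct (growing_cv B) as [l Hl].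
 { intros N. unfold B. simpl sum_f_R0. pose proof (Hterm (S N)). rewrite Fterm_eq, Hr by auto. lra. }
 { exists 2. intros y [N ->]. rewrite EB. eapply Rle_trans. apply sm_le. intros i _. apply (Hterm i). apply geom_le. }
 assert (HF : F d r = l) by (apply F_eq; exact Hl). rewrite HF.
 apply Rle_trans with (2 * (eta + 2 * / 2^K)).
 2: { unfold eta. lra. }
 apply (lim_diff_le A B); auto. intros N. rewrite EA, EB. rewrite <- sm_minus. eapply Rle_trans. apply sm_abs.
 apply Rle_trans with ((eta + 2 * / 2^K) * sm (fun k => / 2^k) (S N)).
 2: { rewrite (Rmult_comm 2 (eta + 2 * / 2^K)). apply Rmult_le_compat_l. assert (0 < / 2^K) by (apply Rinv_0_lt_compat, pow_lt; lra). unfold eta; lra. apply geom_le. }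
 rewrite <- sm_scal. apply sm_le. intros k _.
 replace (/ INR (fct (2 * k)) * Sm d Rl x (2 * k) - md d k / INR (fct (2 * k)) * q ^ k) with
   (/ INR (fct (2 * k)) * (Sm d Rl x (2 * k) - md d k * q ^ k)) by (unfold Rdiv; ring).
 pose proof (fct_pos (2*k)). rewrite Rabs_mult, Rabs_right by (apply Rle_ge; left; apply Rinv_0_lt_compat; auto).
 assert (Hqk : q^k <= 1) by (apply pow_le_1; lra). assert (0 <= q^k) by (apply pow_le; lra).
 assert (H2k : 0 < / 2^k) by (apply Rinv_0_lt_compat, pow_lt; lra).
 assert (H2K : 0 < / 2^K) by (apply Rinv_0_lt_compat, pow_lt; lra).
 assert (0 <= eta) by (unfold eta; lra).
 destruct (Compare_dec.le_lt_dec k K) as [Hk|Hk].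
 - pose proof (He x k Hk) as Hek. fold q in Hek. pose proof (two_fact k).
   assert (/ INR (fct (2*k)) <= / 2^k) by (apply Rinv_le_contravar; auto; apply pow_lt; lra).
   apply Rle_trans with (/ 2^k * (eta * 1)). apply Rmult_le_compat. left; apply Rinv_0_lt_compat; auto. apply Rabs_pos. auto.
   eapply Rle_trans. apply Hek. apply Rmult_le_compat_l; lra.
   assert (0 <= 2 * / 2^K * / 2^k) by (apply Rmult_le_pos; lra). nra.
 - pose proof (Sm_bound d Rl x k Hw Hs Hu) as Hsb. fold q in Hsb. pose proof (md_pos d k ltac:(lia)). pose proof (md_le1 d k ltac:(lia)).
   assert (Rabs (Sm d Rl x (2 * k) - md d k * q ^ k) <= 2).
   { assert (Hmq : 0 <= md d k * q^k) by (apply Rmult_le_pos; lra).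
     eapply Rle_trans. apply Rabs_triang. rewrite Rabs_Ropp, (Rabs_right (md d k * q^k)) by lra.
     assert (md d k * q^k <= 1) by (replace 1 with (1*1) by ring; apply Rmult_le_compat; lra). lra. }
   pose proof (two_fact2 K k Hk).
   assert (/ INR (fct (2*k)) <= / 2^K * / 2^k).
   { rewrite <- Rinv_mult. apply Rinv_le_contravar; auto. apply Rmult_lt_0_compat; apply pow_lt; lra. }
   apply Rle_trans with ((/ 2^K * / 2^k) * 2). apply Rmult_le_compat. left; apply Rinv_0_lt_compat; auto. apply Rabs_pos. auto. auto.
   assert (0 <= eta * / 2^k) by (apply Rmult_le_pos; lra). nra.
Qed.

Lemma sm_nth (L : list (nat -> R)) f d0 : sm (fun i => f (nth i L d0)) (length L) = lsum L f.
Proof. induction L. reflexivity. simpl length. rewrite sm_shift. simpl nth. rewrite lsum_cons, IHL. auto. Qed.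

Theorem theorem6 :
  forall (eps : R) (d : nat), 0 < eps -> (2 <= d)%nat ->
  forall n : nat, INR n - 1 < 36 / eps ^ 2 <= INR n ->   (* n = ceil(36/eps^2) *)
  exists (w : nat -> nat -> R) (v : nat -> R),
    (forall i, (i < n)%nat -> norm d (w i) = 1) /\
    (forall i, (i < n)%nat -> Rabs (v i) <= 1 / INR n) /\
    (forall x : nat -> R, norm d x <= 1 ->
       Rabs (net d n w v x - F d (norm d x)) <= eps).
Proof.
 intros eps d Heps Hd n [Hn1 Hn2].
 assert (He2 : 0 < eps^2) by (apply pow_lt; auto).
 assert (H36 : 0 < 36 / eps^2) by (apply Rdiv_lt_0_compat; lra).
 assert (Hn : 0 < INR n) by lra.
 assert (Hne : 36 <= eps^2 * INR n).
 { apply (Rmult_le_compat_l (eps^2)) in Hn2; [|lra]. replace (eps^2 * (36 / eps^2)) with 36 in Hn2 by (field; lra). lra. }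
 destruct (quad d (eps/2) Hd ltac:(lra)) as [Rl [Hw [Hs [Hu HQ]]]].
 destruct (sample d Rl Hw Hs Hu n) as [ws [Hl [Hin Hsamp]]].
 exists (fun i => nth i ws (fun _ => 0)), (fun _ => 1 / INR n).
 split; [|split].
 - intros i Hi. assert (In (nth i ws (fun _ => 0)) ws) by (apply nth_In; lia).
   destruct (Hin _ H) as [p [Hp E]]. unfold norm. rewrite E, Hu by auto. apply sqrt_1.
 - intros i _. rewrite Rabs_right. lra. apply Rle_ge. unfold Rdiv; rewrite Rmult_1_l. left; apply Rinv_0_lt_compat; auto.
 - intros x Hx.
   assert (Hq : dot d x x <= 1).
   { pose proof (dot_nonneg d x). unfold norm in Hx. rewrite <- (sqrt_sqrt (dot d x x)) by auto.
     pose proof (sqrt_pos (dot d x x)). nra. }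
   set (E := Lf Rl (fun a => exp (dot d a x))).
   assert (Hnet : net d n (fun i => nth i ws (fun _ => 0)) (fun _ => 1 / INR n) x = 1 / INR n * lsum ws (fun w => exp (dot d w x))).
   { unfold net. rewrite rsum_sm. rewrite <- Hl at 1. rewrite (sm_scal (1 / INR n) (fun i => exp (dot d (nth i ws (fun _ => 0)) x))).
     f_equal. apply (sm_nth ws (fun w => exp (dot d w x))). }
   rewrite Hnet.
   replace (1 / INR n * lsum ws (fun w => exp (dot d w x)) - F d (norm d x)) with
     (1 / INR n * (lsum ws (fun w => exp (dot d w x)) - INR n * E) + (E - F d (norm d x))) by (field; lra).
   eapply Rle_trans. apply Rabs_triang. replace eps with (eps/2 + eps/2) by field. apply Rplus_le_compat; [|apply HQ; auto].
   rewrite Rabs_mult, Rabs_right by (apply Rle_ge; unfold Rdiv; rewrite Rmult_1_l; left; apply Rinv_0_lt_compat; auto).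
   apply Rle_trans with (1 / INR n * sqrt (exp (dot d x x) * (INR n * exp 1))).
   { apply Rmult_le_compat_l. unfold Rdiv; rewrite Rmult_1_l; left; apply Rinv_0_lt_compat; auto. apply Hsamp. }
   assert (Hexp : exp (dot d x x) <= 3).
   { pose proof exp_le_3. destruct (Rle_lt_or_eq_dec _ _ Hq) as [Hlt|Heq].
     pose proof (exp_increasing _ _ Hlt). lra. rewrite Heq; lra. }
   assert (Hs1 : sqrt (exp (dot d x x) * (INR n * exp 1)) <= eps * INR n / 2).
   { rewrite <- (sqrt_pow2 (eps * INR n / 2)) by (apply Rlt_le, Rdiv_lt_0_compat; [apply Rmult_lt_0_compat|]; lra).
     apply sqrt_le_1_alt. pose proof exp_le_3. pose proof (exp_pos (dot d x x)). pose proof (exp_pos 1).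
     apply Rle_trans with (9 * INR n). 
     replace (9 * INR n) with (3 * (INR n * 3)) by ring. apply Rmult_le_compat; try lra. apply Rmult_le_pos; lra.
     apply Rmult_le_compat_l; lra.
     replace ((eps * INR n / 2)^2) with (eps^2 * INR n * INR n / 4) by (simpl; field). nra. }
   apply Rle_trans with (1 / INR n * (eps * INR n / 2)).
   apply Rmult_le_compat_l; auto. unfold Rdiv; rewrite Rmult_1_l; left; apply Rinv_0_lt_compat; auto.
   right. field. lra.
Qed.
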